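(* Let $\mathbf f=(f_1,\dots,f_n)\in\mathcal G_0^n$ be strongly generic. Then $f_1,\dots,f_n$ can be extended to an infinite sequence $f_1,f_2,\dots$ in $\mathcal G_0$ such that $\{f_1^e,f_2^e,\dots\}$ is linearly independent and the restriction of the digraph $\Gamma_{\mathcal G}$ to $\{f_1,f_2,\dots\}$ is a universal tournament.
   Context: $\mathcal G$ is the group of strictly increasing continuous maps $f:[-1,1]\to[-1,1]$ with $f(\pm1)=\pm1$; $\mathcal G_0=\{f\in\mathcal G:\int_{-1}^1f=0\}$; $f^e(t)=\tfrac12(f(t)+f(-t))$; $Q(f,g)=\int_{-1}^1 f(g^{-1}(t))\,dt$. The digraph $\Gamma_{\mathcal G}$ on $\mathcal G$: $f\to g$ iff $Q(g,f)>0$. $\mathbf f\in\mathcal G_0^n$ is strongly generic if $\{f_1^e,\dots,f_n^e\}$ is linearly independent and $Q(f_i,f_j)\ne0$ for all $i\ne j$. A tournament $(T,U)$ ($U\subset T\times T$, no diagonal pairs, exactly one of $(i,j),(j,i)$ for distinct $i,j$) is universal if for every tournament $R$ on a countable set $S$, every finite $S_0\subset S$ and every embedding $\phi:R\cap(S_0\times S_0)\to U$ (an injective map with $i\to j$ iff $\phi(i)\to\phi(j)$), there is an embedding $\psi:R\to U$ agreeing with $\phi$ on $S_0$. *)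

(* Defs.v *)
From Stdlib Require Import Reals ClassicalEpsilon.
From Coquelicot Require Import Coquelicot.
Open Scope R_scope.

(* Functions [-1,1] -> [-1,1] are represented as R -> R; only their values on
   [-1,1] matter. *)
Definition inI (x : R) : Prop := -1 <= x <= 1.

Definition inG (f : R -> R) : Prop :=
  (forall x, inI x -> inI (f x)) /\
  (forall x y, inI x -> inI y -> x < y -> f x < f y) /\
  (forall x, inI x -> forall eps, 0 < eps -> exists delta, 0 < delta /\
      forall y, inI y -> Rabs (y - x) < delta -> Rabs (f y - f x) < eps) /\
  f (-1) = -1 /\ f 1 = 1.

Definition inG0 (f : R -> R) : Prop := inG f /\ RInt f (-1) 1 = 0.

Definition feven (f : R -> R) : R -> R := fun t => (f t + f (- t)) / 2.

(* inverse of g on [-1,1]: the point x in [-1,1] with g x = t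
   (unique when g is in G and t in [-1,1]) *)
Definition ginv (g : R -> R) (t : R) : R :=
  epsilon (inhabits 0) (fun x => inI x /\ g x = t).

Definition Q (f g : R -> R) : R := RInt (fun t => f (ginv g t)) (-1) 1.

Fixpoint lincomb (n : nat) (c : nat -> R) (h : nat -> R -> R) (t : R) : R :=
  match n with
  | O => 0
  | S m => lincomb m c h t + c m * h m t
  end.

Definition lin_indep_fin (n : nat) (h : nat -> R -> R) : Prop :=
  forall c : nat -> R,
    (forall t, inI t -> lincomb n c h t = 0) -> forall i, (i < n)%nat -> c i = 0.

Definition lin_indep_inf (h : nat -> R -> R) : Prop :=
  forall n, lin_indep_fin n h.

Definition strongly_generic (n : nat) (f : nat -> R -> R) : Prop :=
  (forall i, (i < n)%nat -> inG0 (f i)) /\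
  lin_indep_fin n (fun i => feven (f i)) /\
  (forall i j, (i < n)%nat -> (j < n)%nat -> i <> j -> Q (f i) (f j) <> 0).

Definition is_tournament {T : Type} (U : T -> T -> Prop) : Prop :=
  (forall i, ~ U i i) /\
  (forall i j, i <> j -> (U i j \/ U j i) /\ ~ (U i j /\ U j i)).

Definition countable_type (S : Type) : Prop :=
  exists c : S -> nat, forall x y, c x = c y -> x = y.

Definition finite_subset {S : Type} (S0 : S -> Prop) : Prop :=
  exists l : list S, forall x, S0 x <-> List.In x l.

Definition embedding_on {S T : Type} (S0 : S -> Prop)
    (R : S -> S -> Prop) (U : T -> T -> Prop) (phi : S -> T) : Prop :=
  (forall x y, S0 x -> S0 y -> phi x = phi y -> x = y) /\
  (forall x y, S0 x -> S0 y -> (R x y <-> U (phi x) (phi y))).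

Definition universal_tournament {T : Type} (U : T -> T -> Prop) : Prop :=
  is_tournament U /\
  forall (S : Type) (R : S -> S -> Prop), countable_type S -> is_tournament R ->
  forall (S0 : S -> Prop) (phi : S -> T), finite_subset S0 ->
    embedding_on S0 R U phi ->
    exists psi : S -> T, embedding_on (fun _ => True) R U psi /\
      forall x, S0 x -> psi x = phi x.

Definition Gamma_on (g : nat -> R -> R) (i j : nat) : Prop :=
  i <> j /\ Q (g j) (g i) > 0.

(* Main.v *)
Require Import Defs.
From Stdlib Require Import Reals Lra Lia Classical ClassicalEpsilon List Arith.
From Coquelicot Require Import Coquelicot.
Open Scope R_scope.

Definition clamp (x : R) : R := Rmax (-1) (Rmin 1 x).

Lemma clamp_in x : inI (clamp x).
Proof. unfold clamp, inI, Rmax, Rmin; repeat destruct Rle_dec; lra. Qed.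

Lemma clamp_id x : inI x -> clamp x = x.
Proof. unfold clamp, inI, Rmax, Rmin; intros; repeat destruct Rle_dec; lra. Qed.

Lemma clamp_lip x y : Rabs (clamp y - clamp x) <= Rabs (y - x).
Proof. unfold clamp, Rmax, Rmin; repeat destruct Rle_dec; unfold Rabs; repeat destruct Rcase_abs; lra. Qed.

Definition rcont (f : R -> R) : Prop :=
  forall x, inI x -> forall eps, 0 < eps -> exists delta, 0 < delta /\
      forall y, inI y -> Rabs (y - x) < delta -> Rabs (f y - f x) < eps.

Lemma rcont_clamp_continuous f : rcont f -> forall z, continuous (fun x => f (clamp x)) z.
Proof.
  intros H z. apply continuity_pt_filterlim. apply continuity_pt_locally. intro eps.
  destruct (H (clamp z) (clamp_in z) eps (cond_pos eps)) as [d [dp Hd]].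
  exists (mkposreal d dp). intros y Hy. apply Hd. apply clamp_in.
  eapply Rle_lt_trans. apply clamp_lip. exact Hy.
Qed.

Lemma rcont_ex_RInt f a b : rcont f -> inI a -> inI b -> ex_RInt f a b.
Proof.
  intros H Ha Hb. apply ex_RInt_ext with (fun x => f (clamp x)).
  - intros x Hx. rewrite clamp_id; auto. unfold inI in *.
    unfold Rmin, Rmax in Hx; destruct Rle_dec; lra.
  - apply (ex_RInt_continuous (V:=R_CompleteNormedModule)). intros; apply rcont_clamp_continuous; auto.
Qed.

Lemma rcont_lip f L : 0 <= L ->
  (forall x y, inI x -> inI y -> Rabs (f y - f x) <= L * Rabs (y - x)) -> rcont f.
Proof.
  intros HL H x Hx eps He. exists (eps / (L + 1)). split.
  apply Rdiv_lt_0_compat; lra.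
  intros y Hy Hxy. eapply Rle_lt_trans. apply H; auto.
  apply Rle_lt_trans with ((L+1) * Rabs (y - x)).
  apply Rmult_le_compat_r. apply Rabs_pos. lra.
  replace eps with ((L+1) * (eps / (L+1))) by (field; lra).
  apply Rmult_lt_compat_l; lra.
Qed.

Lemma rcont_const c : rcont (fun _ => c).
Proof. apply rcont_lip with 0. lra. intros. rewrite Rminus_diag, Rabs_R0. lra. Qed.

Lemma rcont_id : rcont (fun x => x).
Proof. apply rcont_lip with 1. lra. intros. lra. Qed.

Lemma rcont_plus f g : rcont f -> rcont g -> rcont (fun x => f x + g x).
Proof.
  intros Hf Hg x Hx eps He.
  destruct (Hf x Hx (eps/2)) as [d1 [d1p H1]]; [lra|].
  destruct (Hg x Hx (eps/2)) as [d2 [d2p H2]]; [lra|].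
  exists (Rmin d1 d2). split. apply Rmin_pos; auto.
  intros y Hy Hxy.
  assert (A1 := H1 y Hy (Rlt_le_trans _ _ _ Hxy (Rmin_l _ _))).
  assert (A2 := H2 y Hy (Rlt_le_trans _ _ _ Hxy (Rmin_r _ _))).
  replace (f y + g y - (f x + g x)) with ((f y - f x) + (g y - g x)) by ring.
  eapply Rle_lt_trans. apply Rabs_triang. lra.
Qed.

Lemma rcont_scal c f : rcont f -> rcont (fun x => c * f x).
Proof.
  intros Hf x Hx eps He.
  destruct (Hf x Hx (eps / (Rabs c + 1))) as [d [dp H1]].
  apply Rdiv_lt_0_compat; [lra| pose proof (Rabs_pos c); lra].
  exists d. split; auto. intros y Hy Hxy.
  replace (c * f y - c * f x) with (c * (f y - f x)) by ring.
  rewrite Rabs_mult. pose proof (Rabs_pos c).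
  apply Rle_lt_trans with ((Rabs c + 1) * Rabs (f y - f x)).
  apply Rmult_le_compat_r. apply Rabs_pos. lra.
  replace eps with ((Rabs c + 1) * (eps / (Rabs c + 1))) by (field; lra).
  apply Rmult_lt_compat_l. lra. apply H1; auto.
Qed.

Lemma rcont_comp f g : (forall x, inI x -> inI (g x)) -> rcont g -> rcont f ->
  rcont (fun x => f (g x)).
Proof.
  intros Hin Hg Hf x Hx eps He.
  destruct (Hf (g x) (Hin x Hx) eps He) as [d1 [d1p H1]].
  destruct (Hg x Hx d1 d1p) as [d2 [d2p H2]].
  exists d2. split; [exact d2p|]. intros y Hy Hxy. apply H1; auto.
Qed.

Lemma rcont_opp_arg f : rcont f -> rcont (fun x => f (- x)).
Proof.
  intros Hf. apply rcont_comp; auto.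
  intros x Hx; unfold inI in *; lra.
  apply rcont_lip with 1. lra. intros. 
  replace (- y - - x) with (- (y - x)) by ring. rewrite Rabs_Ropp. lra.
Qed.

Lemma rcont_ext f g : (forall x, inI x -> f x = g x) -> rcont f -> rcont g.
Proof.
  intros E Hf x Hx eps He. destruct (Hf x Hx eps He) as [d [dp H]].
  exists d. split; [exact dp|]. intros y Hy Hxy. rewrite <- !E; auto.
Qed.

Lemma rcont_feven f : rcont f -> rcont (feven f).
Proof.
  intros Hf. unfold feven.
  apply rcont_ext with (fun x => /2 * (f x + f (-x))).
  intros; field.
  apply rcont_scal, rcont_plus; auto. apply rcont_opp_arg; auto.
Qed.

Lemma rcont_lincomb n c h : (forall i, (i < n)%nat -> rcont (h i)) -> rcont (lincomb n c h).
Proof.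
  induction n; intros H; simpl.
  - apply rcont_const.
  - apply rcont_plus. apply IHn; intros; apply H; lia.
    apply rcont_scal, H; lia.
Qed.

Definition Gh (g : R -> R) (c : R) : R := RInt (fun x => g (clamp x)) c 1.

Lemma Gh_derive g : rcont g -> forall c, is_derive (Gh g) c (- g (clamp c)).
Proof.
  intros Hg c. unfold Gh.
  apply (is_derive_RInt' (V:=R_NormedModule) (fun x => g (clamp x)) _ c 1).
  - apply filter_forall. intros a0. apply (RInt_correct (V:=R_CompleteNormedModule)).
    apply (ex_RInt_continuous (V:=R_CompleteNormedModule)). intros; apply rcont_clamp_continuous; auto.
  - apply rcont_clamp_continuous; auto.
Qed.

Lemma Gh_eq g c : inI c -> Gh g c = RInt g c 1.
Proof.
  intros Hc. unfold Gh. apply RInt_ext. intros x Hx. rewrite clamp_id; auto.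
  unfold inI in *. unfold Rmin, Rmax in Hx; destruct Rle_dec; lra.
Qed.
Lemma G_rcont b : inG b -> rcont b.
Proof. intros [_ [_ [H _]]]. exact H. Qed.

Lemma G_in b x : inG b -> inI x -> inI (b x).
Proof. intros [H _]. apply H. Qed.

Lemma G_lt b x y : inG b -> inI x -> inI y -> x < y -> b x < b y.
Proof. intros [_ [H _]]. apply H. Qed.

Lemma G_le b x y : inG b -> inI x -> inI y -> x <= y -> b x <= b y.
Proof. intros Hb Hx Hy [H|H]. left; apply G_lt; auto. subst; lra. Qed.

Lemma G_m1 b : inG b -> b (-1) = -1.
Proof. intros [_ [_ [_ [H _]]]]. exact H. Qed.

Lemma G_p1 b : inG b -> b 1 = 1.
Proof. intros [_ [_ [_ [_ H]]]]. exact H. Qed.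

Lemma G_le_rev b x y : inG b -> inI x -> inI y -> b x <= b y -> x <= y.
Proof.
  intros Hb Hx Hy H. destruct (Rle_dec x y) as [?|Hn]; auto.
  assert (b y < b x) by (apply G_lt; auto; lra). lra.
Qed.

Lemma G_inj b x y : inG b -> inI x -> inI y -> b x = b y -> x = y.
Proof.
  intros Hb Hx Hy H. apply Rle_antisym; apply (G_le_rev b); auto; lra.
Qed.

Lemma G_surj b t : inG b -> inI t -> exists x, inI x /\ b x = t.
Proof.
  intros Hb Ht.
  destruct (Req_dec t (-1)) as [E|E].
  { exists (-1). split. unfold inI; lra. rewrite G_m1; auto. }
  destruct (Req_dec t 1) as [E'|E'].
  { exists 1. split. unfold inI; lra. rewrite G_p1; auto. }
  assert (Hc : continuity (fun x => b (clamp x) - t)).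
  { intro z. apply continuity_pt_filterlim.
    apply (rcont_clamp_continuous (fun x => b x - t)).
    apply rcont_plus. apply G_rcont; auto. apply rcont_const. }
  destruct (IVT _ (-1) 1 Hc) as [z [Hz Ez]].
  - lra.
  - rewrite clamp_id by (unfold inI; lra). rewrite G_m1; auto. unfold inI in Ht; lra.
  - rewrite clamp_id by (unfold inI; lra). rewrite G_p1; auto. unfold inI in Ht; lra.
  - exists z. rewrite clamp_id in Ez by (unfold inI; lra). split. unfold inI; lra. lra.
Qed.

Lemma ginv_spec b t : inG b -> inI t -> inI (ginv b t) /\ b (ginv b t) = t.
Proof.
  intros Hb Ht. unfold ginv. apply epsilon_spec. apply G_surj; auto.
Qed.

Lemma ginv_in b t : inG b -> inI t -> inI (ginv b t).
Proof. intros; apply ginv_spec; auto. Qed.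

Lemma ginv_r b t : inG b -> inI t -> b (ginv b t) = t.
Proof. intros; apply ginv_spec; auto. Qed.

Lemma ginv_l b x : inG b -> inI x -> ginv b (b x) = x.
Proof.
  intros Hb Hx. apply (G_inj b); auto. apply ginv_in; auto. apply G_in; auto.
  apply ginv_r; auto. apply G_in; auto.
Qed.

Lemma ginv_le b s t : inG b -> inI s -> inI t -> s <= t -> ginv b s <= ginv b t.
Proof.
  intros Hb Hs Ht H. apply (G_le_rev b); auto using ginv_in.
  rewrite !ginv_r; auto.
Qed.

Lemma ginv_rcont b : inG b -> rcont (ginv b).
Proof.
  intros Hb t0 Ht0 eps He.
  set (x0 := ginv b t0).
  assert (Hx0 : inI x0) by (apply ginv_in; auto).
  assert (Ebx0 : b x0 = t0) by (apply ginv_r; auto).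
  set (D1 := if Rle_dec (x0 + eps/2) 1 then b (x0 + eps/2) - t0 else 1).
  set (D2 := if Rle_dec (-1) (x0 - eps/2) then t0 - b (x0 - eps/2) else 1).
  assert (P1 : 0 < D1).
  { unfold D1. destruct (Rle_dec (x0 + eps/2) 1). rewrite <- Ebx0.
    assert (b x0 < b (x0 + eps/2)) by (apply G_lt; [exact Hb|exact Hx0| |]; unfold inI in *; lra). lra. lra. }
  assert (P2 : 0 < D2).
  { unfold D2. destruct (Rle_dec (-1) (x0 - eps/2)). rewrite <- Ebx0.
    assert (b (x0 - eps/2) < b x0) by (apply G_lt; [exact Hb| |exact Hx0|]; unfold inI in *; lra). lra. lra. }
  exists (Rmin D1 D2). split. apply Rmin_pos; auto.
  intros t Ht Htt.
  assert (Hx : inI (ginv b t)) by (apply ginv_in; auto).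
  assert (Ebx : b (ginv b t) = t) by (apply ginv_r; auto).
  assert (L1 : ginv b t < x0 + eps/2).
  { destruct (Rle_dec (x0 + eps/2) 1) as [r|r].
    - destruct (Rlt_dec (ginv b t) (x0 + eps/2)) as [q|q]; auto.
      exfalso. assert (b (x0 + eps/2) <= b (ginv b t)) by (apply G_le; auto; unfold inI in *; lra).
      assert (Rabs (t - t0) < D1) by (eapply Rlt_le_trans; [exact Htt| apply Rmin_l]).
      unfold D1 in H0. destruct (Rle_dec (x0 + eps/2) 1); [|contradiction].
      rewrite Ebx in H. revert H0; unfold Rabs; destruct Rcase_abs; lra.
    - unfold inI in Hx; lra. }
  assert (L2 : x0 - eps/2 < ginv b t).
  { destruct (Rle_dec (-1) (x0 - eps/2)) as [r|r].
    - destruct (Rlt_dec (x0 - eps/2) (ginv b t)) as [q|q]; auto.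
      exfalso. assert (b (ginv b t) <= b (x0 - eps/2)) by (apply G_le; auto; unfold inI in *; lra).
      assert (Rabs (t - t0) < D2) by (eapply Rlt_le_trans; [exact Htt| apply Rmin_r]).
      unfold D2 in H0. destruct (Rle_dec (-1) (x0 - eps/2)); [|contradiction].
      rewrite Ebx in H. revert H0; unfold Rabs; destruct Rcase_abs; lra.
    - unfold inI in Hx; lra. }
  fold x0. unfold Rabs; destruct Rcase_abs; lra.
Qed.
Fixpoint sumk (N : nat) (f : nat -> R) : R :=
  match N with O => 0 | S M => sumk M f + f M end.

Lemma sumk_ext N f g : (forall k, (k < N)%nat -> f k = g k) -> sumk N f = sumk N g.
Proof. induction N; intros H; simpl; auto. rewrite IHN, H; auto; intros; apply H; lia. Qed.

Lemma RInt_const_R (c s t : R) : RInt (fun _ => c) s t = c * (t - s).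
Proof. rewrite RInt_const. unfold scal; simpl; unfold mult; simpl. ring. Qed.

Lemma piece_bound (F : R -> R) s t lo hi : s <= t -> ex_RInt F s t ->
  (forall y, s <= y <= t -> lo <= F y <= hi) ->
  lo * (t - s) <= RInt F s t <= hi * (t - s).
Proof.
  intros Hst Hex H. rewrite <- !RInt_const_R. split.
  - apply RInt_le; auto. apply ex_RInt_const. intros; apply H; lra.
  - apply RInt_le; auto. apply ex_RInt_const. intros; apply H; lra.
Qed.

Lemma part_bound (u v F H : R -> R) (x : nat -> R) (N : nat) :
  (forall k, (k < N)%nat -> u (x k) <= u (x (S k))) ->
  (forall k, (k < N)%nat -> v (x k) <= v (x (S k))) ->
  (forall k, (k < N)%nat -> forall t, v (x k) <= t <= v (x (S k)) -> u (x k) <= F t <= u (x (S k))) ->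
  (forall k, (k < N)%nat -> forall t, u (x k) <= t <= u (x (S k)) -> v (x k) <= H t <= v (x (S k))) ->
  (forall k, (k < N)%nat -> ex_RInt F (v (x k)) (v (x (S k)))) ->
  (forall k, (k < N)%nat -> ex_RInt H (u (x k)) (u (x (S k)))) ->
  ex_RInt F (v (x O)) (v (x N)) /\ ex_RInt H (u (x O)) (u (x N)) /\
  Rabs (RInt F (v (x O)) (v (x N)) + RInt H (u (x O)) (u (x N))
        - (u (x N) * v (x N) - u (x O) * v (x O)))
  <= sumk N (fun k => (u (x (S k)) - u (x k)) * (v (x (S k)) - v (x k))).
Proof.
  induction N; intros Hu Hv HF HH eF eH.
  - simpl. split; [apply ex_RInt_point|]. split; [apply ex_RInt_point|].
    rewrite !RInt_point. unfold zero; simpl. rewrite Rabs_right; lra.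
  - destruct IHN as [I1 [I2 I3]].
    + intros k Hk; apply Hu; lia.
    + intros k Hk; apply Hv; lia.
    + intros k Hk t Ht; apply HF; auto; lia.
    + intros k Hk t Ht; apply HH; auto; lia.
    + intros k Hk; apply eF; lia.
    + intros k Hk; apply eH; lia.
    + assert (EF := eF N ltac:(lia)). assert (EH := eH N ltac:(lia)).
      split; [eapply ex_RInt_Chasles; eauto|].
      split; [eapply ex_RInt_Chasles; eauto|].
      rewrite <- (RInt_Chasles F _ (v (x N))) by auto.
      rewrite <- (RInt_Chasles H _ (u (x N))) by auto.
      unfold plus; simpl. simpl sumk.
      assert (B1 := piece_bound F (v (x N)) (v (x (S N))) (u (x N)) (u (x (S N)))
                     (Hv N ltac:(lia)) EF (HF N ltac:(lia))).
      assert (B2 := piece_bound H (u (x N)) (u (x (S N))) (v (x N)) (v (x (S N)))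
                     (Hu N ltac:(lia)) EH (HH N ltac:(lia))).
      set (a0 := u (x N)) in *. set (a1 := u (x (S N))) in *.
      set (b0 := v (x N)) in *. set (b1 := v (x (S N))) in *.
      set (IF := RInt F b0 b1) in *. set (IH := RInt H a0 a1) in *.
      set (S0 := sumk N _) in *.
      set (P := RInt F (v (x 0%nat)) b0) in *. set (P' := RInt H (u (x 0%nat)) a0) in *.
      set (c0 := u (x 0%nat) * v (x 0%nat)) in *.
      assert (E1 : a1 * b1 = a0 * b1 + b0 * (a1 - a0) + (a1 - a0) * (b1 - b0) - b0 * (a1 - a0) + b0*(a1-a0) - a0*b0 + a0*b0) by ring.
      assert (Hd : 0 <= (a1 - a0) * (b1 - b0)).
      { assert (a0 <= a1) by (apply Hu; lia). assert (b0 <= b1) by (apply Hv; lia). apply Rmult_le_pos; lra. }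
      revert I3. unfold Rabs. repeat destruct Rcase_abs; intros; nra.
Qed.

Lemma sumk_unif (u v : R -> R) (x : nat -> R) N d :
  (forall k, (k < N)%nat -> v (x (S k)) - v (x k) = d) ->
  sumk N (fun k => (u (x (S k)) - u (x k)) * (v (x (S k)) - v (x k))) = d * (u (x N) - u (x O)).
Proof.
  induction N; intros H; simpl. ring.
  rewrite IHN by (intros; apply H; lia). rewrite H by lia. ring.
Qed.

Lemma small_zero E C : (forall N : nat, Rabs E <= C / (INR N + 1)) -> E = 0.
Proof.
  intros H. destruct (Req_dec E 0) as [?|Hn]; auto. exfalso.
  assert (HE : 0 < Rabs E) by (apply Rabs_pos_lt; auto).
  destruct (INR_unbounded (C / Rabs E)) as [N HN].
  specialize (H N). pose proof (pos_INR N).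
  assert (Rabs E * (INR N + 1) <= C).
  { apply Rmult_le_reg_r with (/ (INR N + 1)). apply Rinv_0_lt_compat; lra.
    rewrite Rmult_assoc, Rinv_r by lra. rewrite Rmult_1_r. exact H. }
  assert (C / Rabs E * Rabs E = C) by (field; lra).
  nra.
Qed.
Lemma grid_in y0 y1 N k : inI y0 -> inI y1 -> y0 <= y1 -> (k <= S N)%nat ->
  inI (y0 + INR k * ((y1 - y0) / INR (S N))).
Proof.
  intros H0 H1 Hle Hk. rewrite S_INR. pose proof (pos_INR N).
  assert (Hk' : INR k <= INR N + 1) by (rewrite <- S_INR; apply le_INR; auto).
  pose proof (pos_INR k).
  assert (0 <= INR k * ((y1 - y0) / (INR N + 1)) <= y1 - y0).
  { split. apply Rmult_le_pos; auto. apply Rdiv_le_0_compat; lra.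
    replace (INR k * ((y1 - y0) / (INR N + 1))) with ((y1 - y0) * (INR k / (INR N + 1))) by (field; lra).
    assert (INR k / (INR N + 1) <= 1).
    { apply Rmult_le_reg_r with (INR N + 1). lra. unfold Rdiv. rewrite Rmult_assoc, Rinv_l by lra. lra. }
    assert (0 <= INR k / (INR N + 1)) by (apply Rdiv_le_0_compat; lra).
    nra. }
  unfold inI in *; lra.
Qed.

Lemma grid_step y0 y1 N k : INR (S k) * ((y1 - y0) / INR (S N)) - INR k * ((y1 - y0) / INR (S N))
  = (y1 - y0) / INR (S N).
Proof. rewrite S_INR. ring. Qed.

Lemma grid_end y0 y1 N : y0 + INR (S N) * ((y1 - y0) / INR (S N)) = y1.
Proof. rewrite S_INR. pose proof (pos_INR N). field. lra. Qed.

Lemma grid_mono y0 y1 N k : y0 <= y1 ->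
  y0 + INR k * ((y1 - y0) / INR (S N)) <= y0 + INR (S k) * ((y1 - y0) / INR (S N)).
Proof.
  intros H. assert (0 <= (y1 - y0) / INR (S N)).
  { apply Rdiv_le_0_compat. lra. rewrite S_INR; pose proof (pos_INR N); lra. }
  rewrite (S_INR k). nra.
Qed.

Lemma area b c : inG b -> inI c -> RInt (ginv b) (b c) 1 + RInt b c 1 = 1 - c * b c.
Proof.
  intros Hb Hc.
  assert (Hbc : inI (b c)) by (apply G_in; auto).
  assert (Hle : b c <= 1) by (unfold inI in Hbc; lra).
  assert (H1 : inI 1) by (unfold inI; lra).
  cut (RInt (ginv b) (b c) 1 + RInt b c 1 - (1 - c * b c) = 0). lra.
  apply small_zero with ((1 - b c) * (1 - c)). intro N.
  set (y := fun k => b c + INR k * ((1 - b c) / INR (S N))).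
  set (x := fun k => ginv b (y k)).
  assert (Yin : forall k, (k <= S N)%nat -> inI (y k)) by (intros; apply grid_in; auto).
  assert (Xin : forall k, (k <= S N)%nat -> inI (x k)) by (intros; apply ginv_in; auto).
  assert (Vx : forall k, (k <= S N)%nat -> b (x k) = y k) by (intros; apply ginv_r; auto).
  assert (Ymono : forall k, y k <= y (S k)) by (intros; apply grid_mono; auto).
  assert (Xmono : forall k, (k < S N)%nat -> x k <= x (S k)).
  { intros; apply ginv_le; [exact Hb|apply Yin; lia|apply Yin; lia|apply Ymono]. }
  destruct (part_bound (fun z => z) b (ginv b) b x (S N)) as [_ [_ Hbd]].
  - exact Xmono.
  - intros k Hk. rewrite !Vx by lia. auto.
  - intros k Hk t Ht. rewrite !Vx in Ht by lia.
    assert (inI t) by (pose proof (Yin k ltac:(lia)); pose proof (Yin (S k) ltac:(lia)); unfold inI in *; lra).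
    split; apply ginv_le; auto; try apply Yin; try lia; lra.
  - intros k Hk t Ht.
    assert (inI t) by (pose proof (Xin k ltac:(lia)); pose proof (Xin (S k) ltac:(lia)); unfold inI in *; lra).
    split; apply G_le; auto; try apply Xin; try lia; lra.
  - intros k Hk. apply rcont_ex_RInt. apply ginv_rcont; auto.
    apply G_in; auto; apply Xin; lia. apply G_in; auto; apply Xin; lia.
  - intros k Hk. apply rcont_ex_RInt. apply G_rcont; auto. apply Xin; lia. apply Xin; lia.
  - rewrite (sumk_unif (fun z => z) b x (S N) ((1 - b c) / INR (S N))) in Hbd.
    2: { intros k Hk. rewrite !Vx by lia. unfold y. pose proof (grid_step (b c) 1 N k). lra. }
    assert (Ex0 : x O = c).
    { unfold x, y. simpl. rewrite Rmult_0_l, Rplus_0_r. apply ginv_l; auto. }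
    assert (ExN : x (S N) = 1).
    { unfold x. replace (y (S N)) with (b 1). apply ginv_l; auto.
      rewrite G_p1 by auto. unfold y. rewrite grid_end. auto. }
    rewrite !Vx in Hbd by lia. rewrite Ex0, ExN in Hbd.
    replace (y O) with (b c) in Hbd by (unfold y; simpl; ring).
    replace (y (S N)) with 1 in Hbd by (unfold y; rewrite grid_end; auto).
    rewrite S_INR in Hbd. replace ((1 - b c) * (1 - c) / (INR N + 1)) with ((1 - b c) / (INR N + 1) * (1 - c)) by (field; pose proof (pos_INR N); lra).
    replace (1 - c * b c) with (1 * 1 - c * b c) by ring.
    exact Hbd.
Qed.
Lemma Q_antisym a b : inG a -> inG b -> Q a b + Q b a = 0.
Proof.
  intros Ha Hb.
  assert (Hm1 : inI (-1)) by (unfold inI; lra).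
  assert (H1 : inI 1) by (unfold inI; lra).
  apply small_zero with (2 * 2). intro N.
  set (y := fun k => -1 + INR k * ((1 - -1) / INR (S N))).
  set (x := fun k => ginv a (y k)).
  assert (Yin : forall k, (k <= S N)%nat -> inI (y k)) by (intros; apply grid_in; auto; lra).
  assert (Xin : forall k, (k <= S N)%nat -> inI (x k)) by (intros; apply ginv_in; auto).
  assert (Vx : forall k, (k <= S N)%nat -> a (x k) = y k) by (intros; apply ginv_r; auto).
  assert (Ymono : forall k, y k <= y (S k)) by (intros; apply grid_mono; lra).
  assert (Xmono : forall k, (k < S N)%nat -> x k <= x (S k)).
  { intros; apply ginv_le; [exact Ha|apply Yin; lia|apply Yin; lia|apply Ymono]. }
  destruct (part_bound b a (fun t => b (ginv a t)) (fun t => a (ginv b t)) x (S N)) as [_ [_ Hbd]].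
  - intros k Hk. apply G_le; [exact Hb|apply Xin; lia|apply Xin; lia|apply Xmono; exact Hk].
  - intros k Hk. rewrite !Vx by lia. apply Ymono.
  - intros k Hk t Ht. rewrite !Vx in Ht by lia.
    assert (inI t) by (pose proof (Yin k ltac:(lia)); pose proof (Yin (S k) ltac:(lia)); unfold inI in *; lra).
    split; apply G_le; auto; try apply Xin; try apply ginv_in; auto; try lia;
      apply ginv_le; auto; try apply Yin; try lia; lra.
  - intros k Hk t Ht.
    assert (Xk := Xin k ltac:(lia)). assert (XSk := Xin (S k) ltac:(lia)).
    assert (inI t) by (pose proof (G_in b _ Hb Xk); pose proof (G_in b _ Hb XSk); unfold inI in *; lra).
    assert (E1 : ginv b (b (x k)) = x k) by (apply ginv_l; auto).
    assert (E2 : ginv b (b (x (S k))) = x (S k)) by (apply ginv_l; auto).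
    split; apply G_le; auto; try apply ginv_in; auto.
    + rewrite <- E1 at 1. apply ginv_le; auto. apply G_in; auto. lra.
    + rewrite <- E2. apply ginv_le; auto. apply G_in; auto. lra.
  - intros k Hk. apply rcont_ex_RInt.
    apply rcont_comp. intros; apply ginv_in; auto. apply ginv_rcont; auto. apply G_rcont; auto.
    apply G_in; auto; apply Xin; lia. apply G_in; auto; apply Xin; lia.
  - intros k Hk. apply rcont_ex_RInt.
    apply rcont_comp. intros; apply ginv_in; auto. apply ginv_rcont; auto. apply G_rcont; auto.
    apply G_in; auto; apply Xin; lia. apply G_in; auto; apply Xin; lia.
  - rewrite (sumk_unif b a x (S N) ((1 - -1) / INR (S N))) in Hbd.
    2: { intros k Hk. rewrite !Vx by lia. unfold y. pose proof (grid_step (-1) 1 N k). lra. }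
    assert (Ex0 : x O = -1).
    { unfold x, y. simpl. rewrite Rmult_0_l, Rplus_0_r.
      rewrite <- (G_m1 a Ha) at 1. apply ginv_l; auto. }
    assert (ExN : x (S N) = 1).
    { unfold x. replace (y (S N)) with (a 1). apply ginv_l; auto.
      rewrite G_p1 by auto. unfold y. rewrite grid_end. auto. }
    rewrite !Vx in Hbd by lia. rewrite Ex0, ExN in Hbd.
    replace (y O) with (-1) in Hbd by (unfold y; simpl; ring).
    replace (y (S N)) with 1 in Hbd by (unfold y; rewrite grid_end; auto).
    rewrite (G_m1 b Hb), (G_p1 b Hb) in Hbd.
    rewrite S_INR in Hbd.
    replace (2 * 2 / (INR N + 1)) with ((1 - -1) / (INR N + 1) * (1 - -1)) by (field; pose proof (pos_INR N); lra).
    unfold Q. replace (RInt (fun t : R => a (ginv b t)) (-1) 1 + RInt (fun t : R => b (ginv a t)) (-1) 1)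
      with (RInt (fun t : R => b (ginv a t)) (-1) 1 + RInt (fun t : R => a (ginv b t)) (-1) 1 - (1 * 1 - -1 * -1)) by ring.
    exact Hbd.
Qed.
Fixpoint cval (l : list (R * R)) (u : R -> R) : R :=
  match l with nil => 0 | p :: l' => fst p * u (snd p) + cval l' u end.

Definition cscale (a : R) (l : list (R * R)) : list (R * R) :=
  map (fun p => (a * fst p, snd p)) l.

Fixpoint bigc (N : nat) (G : nat -> list (R * R)) : list (R * R) :=
  match N with O => nil | S M => bigc M G ++ G M end.

Lemma cval_app l1 l2 u : cval (l1 ++ l2) u = cval l1 u + cval l2 u.
Proof. induction l1; simpl; [ring|rewrite IHl1; ring]. Qed.

Lemma cval_scale a l u : cval (cscale a l) u = a * cval l u.
Proof. induction l; simpl; [ring|rewrite IHl; ring]. Qed.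

Lemma cval_ext l u w : (forall p, In p l -> u (snd p) = w (snd p)) -> cval l u = cval l w.
Proof.
  induction l; simpl; intros H; auto. rewrite H by auto. rewrite IHl; auto.
Qed.

Lemma cval_lin l al be f g : cval l (fun t => al * f t + be * g t) = al * cval l f + be * cval l g.
Proof. induction l; simpl; [ring|rewrite IHl; ring]. Qed.

Lemma cval_zero l : cval l (fun _ => 0) = 0.
Proof. induction l; simpl; [ring|rewrite IHl; ring]. Qed.

Lemma cval_bigc N G u : cval (bigc N G) u = sumk N (fun l => cval (G l) u).
Proof. induction N; simpl; auto. rewrite cval_app, IHN. auto. Qed.

Lemma In_bigc N G p : In p (bigc N G) -> exists l, (l < N)%nat /\ In p (G l).
Proof.
  induction N; simpl; intros H. contradiction.
  apply in_app_or in H. destruct H as [H|H].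
  destruct (IHN H) as [l [Hl Hp]]. exists l; split; auto; lia.
  exists N; split; auto.
Qed.

Lemma In_cscale a l p : In p (cscale a l) -> exists q, In q l /\ snd p = snd q.
Proof.
  unfold cscale. intros H. apply in_map_iff in H. destruct H as [q [E Hq]].
  exists q. split; auto. subst; auto.
Qed.

Lemma sumk_zero N : sumk N (fun _ => 0) = 0.
Proof. induction N; simpl; auto. rewrite IHN; ring. Qed.

Lemma sumk_kron N c j : (j < N)%nat -> sumk N (fun l => c l * (if Nat.eqb j l then 1 else 0)) = c j.
Proof.
  induction N; intros H; simpl. lia.
  destruct (Nat.eq_dec j N).
  - subst. rewrite Nat.eqb_refl.
    rewrite (sumk_ext N _ (fun _ => 0)).
    + rewrite sumk_zero. ring.
    + intros k Hk. destruct (Nat.eqb_spec N k); [lia|ring].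
  - rewrite IHN by lia. destruct (Nat.eqb_spec j N); [lia|ring].
Qed.

Lemma sumk_opp N f : sumk N (fun l => - f l) = - sumk N f.
Proof. induction N; simpl. ring. rewrite IHN; ring. Qed.


Lemma cval_sumk A n c f : cval A (fun t => sumk n (fun i => c i * f i t)) = sumk n (fun i => c i * cval A (f i)).
Proof.
  induction n; simpl. apply cval_zero.
  rewrite <- IHn. 
  transitivity (cval A (fun t => 1 * sumk n (fun i => c i * f i t) + c n * f n t)).
  apply cval_ext; intros; ring.
  rewrite cval_lin. ring.
Qed.

Lemma cval_swap A B (phi : R -> R -> R) :
  cval A (fun c => cval B (fun t => phi c t)) = cval B (fun t => cval A (fun c => phi c t)).
Proof.
  induction A as [|p A IH]; simpl.
  - rewrite cval_zero; auto.
  - rewrite IH.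
    transitivity (cval B (fun t => fst p * phi (snd p) t + 1 * cval A (fun c => phi c t))).
    + rewrite (cval_lin B (fst p) 1 (phi (snd p)) (fun t => cval A (fun c => phi c t))). change (fun t : R => phi (snd p) t) with (phi (snd p)). ring.
    + apply cval_ext; intros; ring.
Qed.

Lemma lincomb_sumk n c h t : lincomb n c h t = sumk n (fun i => c i * h i t).
Proof. induction n; simpl; auto. rewrite IHn; auto. Qed.

Lemma dich (P : R -> Prop) (F : nat -> R -> R) (N : nat) :
  (exists d : nat -> R, (exists l, (l < N)%nat /\ d l <> 0) /\
      forall x, P x -> sumk N (fun l => d l * F l x) = 0)
  \/ (forall y : nat -> R, exists A, (forall p, In p A -> P (snd p)) /\
        forall l, (l < N)%nat -> cval A (F l) = y l).
Proof.
  induction N.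
  - right. intros y. exists nil. split. intros p []. intros; lia.
  - destruct IHN as [[d [[l [Hl Hd]] Hs]] | Hs].
    + left. exists (fun j => if Nat.eqb j N then 0 else d j). split.
      * exists l. split. lia. destruct (Nat.eqb_spec l N); [lia|auto].
      * intros x Px. simpl. rewrite Nat.eqb_refl.
        rewrite Rmult_0_l, Rplus_0_r. rewrite <- (Hs x Px). apply sumk_ext.
        intros k Hk. destruct (Nat.eqb_spec k N); [lia|auto].
    + set (e := fun l j => if Nat.eqb l j then 1 else 0).
      assert (HB : forall l, { A | (forall p, In p A -> P (snd p)) /\
                     forall j, (j < N)%nat -> cval A (F j) = e l j }).
      { intros l. apply constructive_indefinite_description. apply Hs. }
      set (B := fun l => proj1_sig (HB l)).
      assert (BP : forall l p, In p (B l) -> P (snd p)) by (intros l; apply (proj2_sig (HB l))).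
      assert (BV : forall l j, (j < N)%nat -> cval (B l) (F j) = e l j) by (intros l; apply (proj2_sig (HB l))).
      set (lam := fun l => cval (B l) (F N)).
      destruct (classic (exists x, P x /\ F N x - sumk N (fun l => F l x * lam l) <> 0)) as [[x0 [Px0 Hx0]] | Hno].
      * right. intros y. destruct (Hs y) as [A [AP AV]].
        set (R0 := F N x0 - sumk N (fun l => F l x0 * lam l)) in *.
        set (C := (1, x0) :: bigc N (fun l => cscale (- F l x0) (B l))).
        assert (CV : forall j, (j < N)%nat -> cval C (F j) = 0).
        { intros j Hj. unfold C. simpl. rewrite cval_bigc.
          rewrite (sumk_ext N _ (fun l => (- F l x0) * e l j)).
          - rewrite (sumk_ext N _ (fun l => (- F l x0) * (if Nat.eqb j l then 1 else 0))).
            rewrite sumk_kron by auto. ring.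
            intros k Hk. unfold e. rewrite Nat.eqb_sym. auto.
          - intros k Hk. rewrite cval_scale, BV; auto. }
        assert (CN : cval C (F N) = R0).
        { unfold C. simpl. rewrite cval_bigc.
          rewrite (sumk_ext N _ (fun l => - (F l x0 * lam l))).
          - unfold R0. rewrite sumk_opp. ring.
          - intros k Hk. rewrite cval_scale. unfold lam. ring. }
        exists (A ++ cscale ((y N - cval A (F N)) / R0) C). split.
        -- intros p Hp. apply in_app_or in Hp. destruct Hp as [Hp|Hp]; auto.
           apply In_cscale in Hp. destruct Hp as [q [Hq E]]. rewrite E.
           unfold C in Hq. simpl in Hq. destruct Hq as [Hq|Hq]. subst; auto.
           apply In_bigc in Hq. destruct Hq as [l [Hl Hq]].
           apply In_cscale in Hq. destruct Hq as [q' [Hq' E']]. rewrite E'. eapply BP; eauto.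
        -- intros j Hj. rewrite cval_app, cval_scale.
           destruct (Nat.eq_dec j N).
           ++ subst. rewrite CN. field. auto.
           ++ rewrite CV, AV by lia. ring.
      * left. exists (fun j => if Nat.eqb j N then 1 else - lam j). split.
        -- exists N. split. lia. rewrite Nat.eqb_refl. lra.
        -- intros x Px. simpl. rewrite Nat.eqb_refl.
           assert (E : F N x - sumk N (fun l => F l x * lam l) = 0).
           { apply NNPP. intro Hn. apply Hno. exists x. auto. }
           rewrite <- E. rewrite (sumk_ext N _ (fun l => - (F l x * lam l))).
           rewrite sumk_opp. ring.
           intros k Hk. destruct (Nat.eqb_spec k N); [lia|ring].
Qed.
Definition ramp (c x : R) : R := Rmax (x - c) 0.

Definition Kf (l : list (R * R)) (c : R) : R := cval l (fun t => ramp c t).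

Definition ind (s : R) : R -> R := fun t => if Req_EM_T t s then 1 else 0.

Definition Wsum (l : list (R * R)) (s : R) : R := cval l (ind s).

Definition rm (s : R) (l : list (R * R)) : list (R * R) :=
  filter (fun p => if Req_EM_T (snd p) s then false else true) l.

Lemma cval_split l s u : cval l u = Wsum l s * u s + cval (rm s l) u.
Proof.
  induction l as [|[w t] l IH]; unfold Wsum, rm, ind in *; simpl. ring.
  destruct (Req_EM_T t s).
  - subst. simpl. rewrite IH. ring.
  - simpl. rewrite IH. ring.
Qed.

Lemma rm_length s l : (length (rm s l) <= length l)%nat.
Proof.
  induction l as [|[w t] l IH]; unfold rm in *; simpl. lia.
  destruct (Req_EM_T t s); simpl; lia.
Qed.

Lemma secdiff l s : exists h0, 0 < h0 /\ forall h, 0 < h < h0 ->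
  Kf l (s + h) + Kf l (s - h) - 2 * Kf l s = h * Wsum l s.
Proof.
  induction l as [|[w t] l IH].
  - exists 1. split. lra. intros. unfold Kf, Wsum. simpl. ring.
  - destruct IH as [h0 [h0p IH]]. unfold Kf, Wsum, ind in *. simpl.
    destruct (Req_EM_T t s).
    + subst t. exists h0. split; auto. intros h Hh. specialize (IH h Hh).
      assert (ramp (s + h) s = 0) by (unfold ramp, Rmax; destruct Rle_dec; lra).
      assert (ramp (s - h) s = h) by (unfold ramp, Rmax; destruct Rle_dec; lra).
      assert (ramp s s = 0) by (unfold ramp, Rmax; destruct Rle_dec; lra).
      simpl in *. rewrite H, H0, H1. lra.
    + exists (Rmin h0 (Rabs (t - s))). split.
      apply Rmin_pos; auto. apply Rabs_pos_lt; lra.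
      intros h Hh. assert (Hh0 : 0 < h < h0) by (pose proof (Rmin_l h0 (Rabs (t - s))); lra).
      specialize (IH h Hh0). simpl in *.
      assert (Ht : h < Rabs (t - s)) by (pose proof (Rmin_r h0 (Rabs (t - s))); lra).
      assert (ramp (s + h) t + ramp (s - h) t - 2 * ramp s t = 0).
      { unfold ramp, Rmax. revert Ht. unfold Rabs. destruct Rcase_abs; intros;
        repeat destruct Rle_dec; lra. }
      nra.
Qed.

Lemma kink_W l s D : is_derive (Kf l) s D -> Wsum l s = 0.
Proof.
  intros Hd. apply is_derive_Reals in Hd.
  destruct (Req_dec (Wsum l s) 0) as [?|HW]; auto. exfalso.
  assert (HWp : 0 < Rabs (Wsum l s)) by (apply Rabs_pos_lt; auto).
  destruct (Hd (Rabs (Wsum l s) / 4)) as [delta Hdel]. lra.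
  destruct (secdiff l s) as [h0 [h0p Hsd]].
  set (h := Rmin delta h0 / 2).
  assert (hp : 0 < h) by (unfold h; pose proof (Rmin_pos _ _ (cond_pos delta) h0p); lra).
  assert (hd : h < delta) by (unfold h; pose proof (Rmin_l delta h0); pose proof (cond_pos delta); lra).
  assert (hh : h < h0) by (unfold h; pose proof (Rmin_r delta h0); lra).
  assert (A1 := Hdel h ltac:(lra) ltac:(rewrite Rabs_right; lra)).
  assert (A2 := Hdel (- h) ltac:(lra) ltac:(rewrite Rabs_left; lra)).
  assert (E := Hsd h ltac:(lra)).
  replace (s + - h) with (s - h) in A2 by ring.
  set (a1 := (Kf l (s + h) - Kf l s) / h) in *.
  set (b1 := (Kf l (s - h) - Kf l s) / - h) in *.
  assert (EW : Wsum l s = a1 - b1).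
  { unfold a1, b1. apply Rmult_eq_reg_l with h; [|lra].
    rewrite <- E. field. lra. }
  assert (Rabs (Wsum l s) <= Rabs (a1 - D) + Rabs (b1 - D)).
  { rewrite EW. replace (a1 - b1) with ((a1 - D) + - (b1 - D)) by ring.
    eapply Rle_trans. apply Rabs_triang. rewrite Rabs_Ropp. lra. }
  lra.
Qed.

Lemma kink_all_aux n : forall l, (length l <= n)%nat ->
  (forall s, 0 < s < 1 -> exists D, is_derive (Kf l) s D) ->
  (forall p, In p l -> 0 < snd p < 1) -> forall u, cval l u = 0.
Proof.
  induction n; intros l Hlen Hd Hp u.
  - destruct l; simpl in *; [auto|lia].
  - destruct l as [|[w t] l'].
    + simpl; auto.
    + assert (Ht : 0 < t < 1) by (apply (Hp (w, t)); simpl; auto).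
      destruct (Hd t Ht) as [D HD].
      assert (W0 := kink_W _ _ _ HD).
      rewrite (cval_split _ t u), W0, Rmult_0_l, Rplus_0_l.
      apply IHn.
      * assert (E : rm t ((w, t) :: l') = rm t l').
        { unfold rm; simpl. destruct (Req_EM_T t t); [auto|congruence]. }
        rewrite E. pose proof (rm_length t l'). simpl in Hlen. lia.
      * intros s Hs. destruct (Hd s Hs) as [D' HD']. exists D'.
        apply is_derive_ext with (Kf ((w, t) :: l')); auto.
        intro c. unfold Kf. rewrite (cval_split _ t), W0, Rmult_0_l, Rplus_0_l. reflexivity.
      * intros p Hin. apply Hp. unfold rm in Hin. apply filter_In in Hin. tauto.
Qed.

Lemma kink_all l : (forall s, 0 < s < 1 -> exists D, is_derive (Kf l) s D) ->
  (forall p, In p l -> 0 < snd p < 1) -> forall u, cval l u = 0.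
Proof. intros. apply (kink_all_aux (length l)); auto. Qed.
Ltac req := match goal with |- @eq _ ?a ?b => change (@eq R a b) end.

Lemma RInt_ext_R (f g : R -> R) a b : (forall x, Rmin a b < x < Rmax a b -> f x = g x) ->
  RInt f a b = RInt g a b.
Proof. intros H. apply RInt_ext. exact H. Qed.

Lemma ramp_lip c x y : Rabs (ramp c y - ramp c x) <= Rabs (y - x).
Proof. unfold ramp, Rmax; repeat destruct Rle_dec; unfold Rabs; repeat destruct Rcase_abs; lra. Qed.

Lemma ramp_rcont c : rcont (ramp c).
Proof. apply rcont_lip with 1. lra. intros. rewrite Rmult_1_l. apply ramp_lip. Qed.

Lemma ramp_m1 c : -1 <= c -> ramp c (-1) = 0.
Proof. intros; unfold ramp, Rmax; destruct Rle_dec; lra. Qed.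

Lemma ramp_1 c : c <= 1 -> ramp c 1 = 1 - c.
Proof. intros; unfold ramp, Rmax; destruct Rle_dec; lra. Qed.

Lemma RInt_lin_shift c s t : RInt (fun x => x - c) s t = ((t - c) ^ 2 - (s - c) ^ 2) / 2.
Proof.
  apply is_RInt_unique.
  assert (K : is_RInt (fun x => x - c) s t (minus ((fun x => (x - c) ^ 2 / 2) t) ((fun x => (x - c) ^ 2 / 2) s))).
  { apply (is_RInt_derive (V:=R_CompleteNormedModule) (fun x => (x - c) ^ 2 / 2) (fun x => x - c)).
    - intros x _. auto_derive. auto. change (1 * ((1 + 1) * ((x + - c) * 1)) * / 2 = x - c :> R). field.
    - intros x _. apply (continuous_minus (K:=R_AbsRing) (V:=R_NormedModule)). apply continuous_id. apply continuous_const. }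
  replace (((t - c) ^ 2 - (s - c) ^ 2) / 2) with (minus ((fun x => (x - c) ^ 2 / 2) t) ((fun x => (x - c) ^ 2 / 2) s)).
  exact K. unfold minus, plus, opp. simpl. field.
Qed.

Lemma RInt_ramp c : inI c -> RInt (ramp c) (-1) 1 = (1 - c) ^ 2 / 2.
Proof.
  intros Hc. assert (Hm : inI (-1)) by (unfold inI; lra). assert (H1 : inI 1) by (unfold inI; lra).
  rewrite <- (RInt_Chasles (V:=R_CompleteNormedModule) (ramp c) (-1) c 1).
  2,3: apply rcont_ex_RInt; auto using ramp_rcont.
  rewrite (RInt_ext (ramp c) (fun _ => 0) (-1) c).
  2: { intros x Hx. unfold inI in Hc. unfold Rmin, Rmax in Hx; destruct Rle_dec; unfold ramp, Rmax; destruct Rle_dec; lra. }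
  rewrite (RInt_ext (ramp c) (fun x => x - c) c 1).
  2: { intros x Hx. unfold inI in Hc. unfold Rmin, Rmax in Hx; destruct Rle_dec; unfold ramp, Rmax; destruct Rle_dec; lra. }
  rewrite RInt_const_R, RInt_lin_shift. unfold plus; simpl. field.
Qed.

Lemma RInt_idf : RInt (fun x => x) (-1) 1 = 0.
Proof.
  rewrite (RInt_ext_R (fun x => x) (fun x => x - 0)) by (intros; ring).
  rewrite RInt_lin_shift. req. field.
Qed.

Lemma Q_ramp b c : inG b -> inI c ->
  RInt (fun t => ramp c (ginv b t)) (-1) 1 = 1 - c - RInt b c 1.
Proof.
  intros Hb Hc. assert (Hm : inI (-1)) by (unfold inI; lra). assert (H1 : inI 1) by (unfold inI; lra).
  assert (Hbc : inI (b c)) by (apply G_in; auto).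
  assert (Rc : rcont (fun t => ramp c (ginv b t))).
  { apply rcont_comp. intros; apply ginv_in; auto. apply ginv_rcont; auto. apply ramp_rcont. }
  rewrite <- (RInt_Chasles (V:=R_CompleteNormedModule) _ (-1) (b c) 1).
  2,3: apply rcont_ex_RInt; auto.
  rewrite (RInt_ext _ (fun _ => 0) (-1) (b c)).
  2: { intros x Hx. assert (inI x) by (unfold inI in *; unfold Rmin, Rmax in Hx; destruct Rle_dec; lra).
       assert (ginv b x <= c).
       { rewrite <- (ginv_l b c) by auto. apply ginv_le; auto. unfold inI in *; unfold Rmin, Rmax in Hx; destruct Rle_dec; lra. }
       unfold ramp, Rmax; destruct Rle_dec; lra. }
  rewrite (RInt_ext _ (fun t => ginv b t - c) (b c) 1).
  2: { intros x Hx. assert (inI x) by (unfold inI in *; unfold Rmin, Rmax in Hx; destruct Rle_dec; lra).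
       assert (c <= ginv b x).
       { rewrite <- (ginv_l b c) at 1 by auto. apply ginv_le; auto. unfold inI in *; unfold Rmin, Rmax in Hx; destruct Rle_dec; lra. }
       unfold ramp, Rmax; destruct Rle_dec; lra. }
  rewrite RInt_const_R.
  rewrite (RInt_minus (V:=R_CompleteNormedModule) (ginv b) (fun _ => c)).
  2: apply rcont_ex_RInt; auto; apply ginv_rcont; auto.
  2: apply ex_RInt_const.
  rewrite RInt_const_R. unfold plus, minus, plus, opp; simpl.
  pose proof (area b c Hb Hc). lra.
Qed.
Lemma RInt_plus_R (f g : R -> R) a b : ex_RInt f a b -> ex_RInt g a b ->
  RInt (fun x => f x + g x) a b = RInt f a b + RInt g a b.
Proof. intros. apply (RInt_plus (V:=R_CompleteNormedModule)); auto. Qed.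

Lemma RInt_scal_R (f : R -> R) a b c : ex_RInt f a b ->
  RInt (fun x => c * f x) a b = c * RInt f a b.
Proof. intros. apply (RInt_scal (V:=R_CompleteNormedModule)); auto. Qed.

Fixpoint cabs (l : list (R * R)) : R :=
  match l with nil => 0 | p :: l' => Rabs (fst p) + cabs l' end.

Lemma cabs_pos l : 0 <= cabs l.
Proof. induction l; simpl. lra. pose proof (Rabs_pos (fst a)); lra. Qed.

Lemma cval_ramp_lip A x y : Rabs (cval A (fun c => ramp c y) - cval A (fun c => ramp c x)) <= cabs A * Rabs (y - x).
Proof.
  induction A as [|[w c] A IH]; simpl.
  - rewrite Rminus_diag, Rabs_R0. lra.
  - replace (w * ramp c y + cval A (fun c0 => ramp c0 y) - (w * ramp c x + cval A (fun c0 => ramp c0 x)))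
      with (w * (ramp c y - ramp c x) + (cval A (fun c0 => ramp c0 y) - cval A (fun c0 => ramp c0 x))) by ring.
    eapply Rle_trans. apply Rabs_triang. rewrite Rabs_mult.
    pose proof (ramp_lip c x y). pose proof (Rabs_pos w). pose proof (Rabs_pos (ramp c y - ramp c x)).
    assert (Rabs w * Rabs (ramp c y - ramp c x) <= Rabs w * Rabs (y - x)) by (apply Rmult_le_compat_l; auto).
    lra.
Qed.

Lemma rcont_cval A (phi : R -> R -> R) : (forall p, In p A -> rcont (phi (snd p))) ->
  rcont (fun t => cval A (fun c => phi c t)).
Proof.
  induction A as [|p A IH]; intros H; simpl.
  - apply rcont_const.
  - apply rcont_plus. apply rcont_scal. apply H; simpl; auto. apply IH. intros; apply H; simpl; auto.
Qed.

Lemma RInt_cval A (phi : R -> R -> R) a b : inI a -> inI b -> (forall p, In p A -> rcont (phi (snd p))) ->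
  RInt (fun t => cval A (fun c => phi c t)) a b = cval A (fun c => RInt (phi c) a b).
Proof.
  intros Ha Hb. induction A as [|p A IH]; intros H; simpl.
  - rewrite RInt_const_R. ring.
  - assert (E1 : ex_RInt (fun t => fst p * phi (snd p) t) a b).
    { apply rcont_ex_RInt; auto. apply rcont_scal. apply H; simpl; auto. }
    assert (E2 : ex_RInt (fun t => cval A (fun c => phi c t)) a b).
    { apply rcont_ex_RInt; auto. apply rcont_cval. intros; apply H; simpl; auto. }
    rewrite (RInt_plus_R _ _ a b E1 E2).
    rewrite IH by (intros; apply H; simpl; auto).
    rewrite (RInt_scal_R (phi (snd p)) a b (fst p)).
    reflexivity. apply rcont_ex_RInt; auto. apply H; simpl; auto.
Qed.

Definition hfun (A : list (R * R)) (lam : R) (x : R) : R := x + lam * cval A (fun c => ramp c x).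

Definition inside (c : R) : Prop := -1 < c < 1.

Lemma hfun_inG0 A : (forall p, In p A -> inside (snd p)) ->
  cval A (fun c => 1 - c) = 0 -> cval A (fun c => (1 - c) ^ 2) = 0 ->
  inG0 (hfun A (/ (2 * (1 + cabs A)))).
Proof.
  intros Hin E1 E2. set (lam := / (2 * (1 + cabs A))).
  pose proof (cabs_pos A) as Hc.
  assert (Hlam : 0 < lam) by (unfold lam; apply Rinv_0_lt_compat; lra).
  assert (Hlc : lam * cabs A <= 1/2).
  { unfold lam. apply Rmult_le_reg_l with (2 * (1 + cabs A)). lra.
    rewrite <- Rmult_assoc, Rinv_r by lra. lra. }
  assert (Hm1 : hfun A lam (-1) = -1).
  { unfold hfun. rewrite (cval_ext A _ (fun _ => 0)). rewrite cval_zero. ring.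
    intros p Hp. specialize (Hin p Hp). unfold inside in Hin. apply ramp_m1. lra. }
  assert (Hp1 : hfun A lam 1 = 1).
  { unfold hfun. rewrite (cval_ext A _ (fun c => 1 - c)). rewrite E1. ring.
    intros p Hp. specialize (Hin p Hp). unfold inside in Hin. apply ramp_1. lra. }
  assert (Hstrict : forall x y, x < y -> hfun A lam y - hfun A lam x >= (y - x) / 2).
  { intros x y Hxy. unfold hfun. pose proof (cval_ramp_lip A x y).
    rewrite (Rabs_right (y - x)) in H by lra.
    assert (lam * Rabs (cval A (fun c => ramp c y) - cval A (fun c => ramp c x)) <= lam * (cabs A * (y - x))).
    { apply Rmult_le_compat_l; lra. }
    assert (lam * (cabs A * (y - x)) <= (y - x) / 2) by nra.
    revert H0. unfold Rabs. destruct Rcase_abs; intros; nra. }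
  assert (Hle : forall x y, x <= y -> hfun A lam x <= hfun A lam y).
  { intros x y [H|H]. pose proof (Hstrict x y H); lra. subst; lra. }
  split; [split|].
  - intros x Hx. unfold inI in *. split.
    + rewrite <- Hm1. apply Hle. lra.
    + rewrite <- Hp1. apply Hle. lra.
  - split; [|split; [|split; auto]].
    + intros x y _ _ Hxy. pose proof (Hstrict x y Hxy). lra.
    + apply rcont_lip with (1 + lam * cabs A). nra.
      intros x y _ _. unfold hfun.
      replace (y + lam * cval A (fun c => ramp c y) - (x + lam * cval A (fun c => ramp c x)))
        with ((y - x) + lam * (cval A (fun c => ramp c y) - cval A (fun c => ramp c x))) by ring.
      eapply Rle_trans. apply Rabs_triang. rewrite Rabs_mult, (Rabs_right lam) by lra.
      pose proof (cval_ramp_lip A x y). pose proof (Rabs_pos (y - x)).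
      assert (lam * Rabs (cval A (fun c => ramp c y) - cval A (fun c => ramp c x)) <= lam * (cabs A * Rabs (y - x)))
        by (apply Rmult_le_compat_l; lra).
      nra.
  - unfold hfun.
    assert (Hm : inI (-1)) by (unfold inI; lra). assert (H1 : inI 1) by (unfold inI; lra).
    assert (Ra : forall p, In p A -> rcont (ramp (snd p))) by (intros; apply ramp_rcont).
    rewrite (RInt_plus_R (fun x => x) (fun x => lam * cval A (fun c => ramp c x))).
    2: apply rcont_ex_RInt; auto; apply rcont_id.
    2: apply rcont_ex_RInt; auto; apply rcont_scal, rcont_cval; auto.
    rewrite (RInt_scal_R (fun x => cval A (fun c => ramp c x))).
    2: apply rcont_ex_RInt; auto; apply rcont_cval; auto.
    rewrite RInt_cval by auto. rewrite RInt_idf.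
    rewrite (cval_ext A _ (fun c => /2 * (1 - c) ^ 2 + 0 * 0)).
    2: { intros p Hp. rewrite RInt_ramp. field. specialize (Hin p Hp). unfold inside in Hin; unfold inI; lra. }
    rewrite (cval_lin A (/2) 0 (fun c => (1 - c) ^ 2) (fun _ => 0)). rewrite E2.
    req. ring.
Qed.
Lemma RInt_ginv0 b : inG0 b -> RInt (ginv b) (-1) 1 = 0.
Proof.
  intros [Hb Hi]. assert (Hm : inI (-1)) by (unfold inI; lra).
  pose proof (area b (-1) Hb Hm). rewrite (G_m1 b Hb) in H. rewrite Hi in H. lra.
Qed.

Lemma Q_hfun A lam b : (forall p, In p A -> inside (snd p)) -> inG0 b ->
  Q (hfun A lam) b = lam * (cval A (fun c => 1 - c) - cval A (fun c => RInt b c 1)).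
Proof.
  intros Hin Hb. destruct Hb as [Hg Hi].
  assert (Hm : inI (-1)) by (unfold inI; lra). assert (H1 : inI 1) by (unfold inI; lra).
  assert (Rc : forall p, In p A -> rcont (fun t => ramp (snd p) (ginv b t))).
  { intros. apply rcont_comp. intros; apply ginv_in; auto. apply ginv_rcont; auto. apply ramp_rcont. }
  unfold Q, hfun.
  rewrite (RInt_plus_R (ginv b) (fun t => lam * cval A (fun c => ramp c (ginv b t)))).
  2: apply rcont_ex_RInt; auto; apply ginv_rcont; auto.
  2: apply rcont_ex_RInt; auto; apply rcont_scal; apply (rcont_cval A (fun c t => ramp c (ginv b t))); auto.
  rewrite (RInt_scal_R (fun t => cval A (fun c => ramp c (ginv b t)))).
  2: apply rcont_ex_RInt; auto; apply (rcont_cval A (fun c t => ramp c (ginv b t))); auto.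
  rewrite (RInt_cval A (fun c t => ramp c (ginv b t))) by auto.
  rewrite RInt_ginv0 by (split; auto).
  rewrite (cval_ext A _ (fun c => 1 * (1 - c) + (-1) * RInt b c 1)).
  2: { intros p Hp. rewrite Q_ramp; auto. ring. specialize (Hin p Hp). unfold inside in Hin; unfold inI; lra. }
  rewrite (cval_lin A 1 (-1) (fun c => 1 - c) (fun c => RInt b c 1)). ring.
Qed.

Lemma feven_hfun A lam t : feven (hfun A lam) t = lam * cval A (fun c => feven (ramp c) t).
Proof.
  unfold feven, hfun.
  rewrite (cval_ext A (fun c => (ramp c t + ramp c (- t)) / 2) (fun c => /2 * ramp c t + /2 * ramp c (- t))).
  2: intros; field.
  rewrite (cval_lin A (/2) (/2) (fun c => ramp c t) (fun c => ramp c (- t))). field.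
Qed.

Lemma feven_G_m1 g : inG g -> feven g (-1) = 0.
Proof. intros Hg. unfold feven. replace (- -1) with 1 by ring. rewrite G_m1, G_p1 by auto. field. Qed.

Lemma feven_G_p1 g : inG g -> feven g 1 = 0.
Proof. intros Hg. unfold feven. replace (- 1) with (-1) by ring. rewrite G_m1, G_p1 by auto. field. Qed.

Lemma feven_sym g t : feven g (- t) = feven g t.
Proof. unfold feven. rewrite Ropp_involutive. field. Qed.

Lemma lincomb_ext_pt n c h t t' : (forall i, (i < n)%nat -> h i t = h i t') -> lincomb n c h t = lincomb n c h t'.
Proof. induction n; simpl; intros H; auto. rewrite IHn, (H n); [reflexivity|lia|]. intros; apply H; lia. Qed.

Lemma indep_01 k (F : nat -> R -> R) :
  (forall i, (i < k)%nat -> rcont (F i)) ->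
  (forall i t, (i < k)%nat -> F i (- t) = F i t) ->
  (forall i, (i < k)%nat -> F i 1 = 0) ->
  lin_indep_fin k F ->
  forall d, (forall x, 0 < x < 1 -> sumk k (fun l => d l * F l x) = 0) -> forall i, (i < k)%nat -> d i = 0.
Proof.
  intros Hc Hs H1 Hind d Hd. apply Hind.
  set (L := lincomb k d F).
  assert (LC : rcont L) by (apply rcont_lincomb; auto).
  assert (L01 : forall x, 0 < x < 1 -> L x = 0) by (intros; unfold L; rewrite lincomb_sumk; auto).
  assert (Lsym : forall t, L (- t) = L t) by (intros; unfold L; apply lincomb_ext_pt; intros; apply Hs; auto).
  assert (L1 : L 1 = 0).
  { unfold L. rewrite lincomb_sumk. rewrite (sumk_ext k _ (fun _ => 0)). apply sumk_zero.
    intros; rewrite H1; auto; ring. }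
  assert (L0 : L 0 = 0).
  { destruct (Req_dec (L 0) 0) as [?|Hn]; auto. exfalso.
    assert (Hp : 0 < Rabs (L 0)) by (apply Rabs_pos_lt; auto).
    destruct (LC 0 ltac:(unfold inI; lra) _ Hp) as [dl [dlp Hdl]].
    set (y := Rmin (dl / 2) (1/2)).
    assert (yp : 0 < y) by (unfold y; apply Rmin_pos; lra).
    assert (y1 : y <= 1/2) by (unfold y; apply Rmin_r).
    assert (yd : y <= dl / 2) by (unfold y; apply Rmin_l).
    assert (Hy := Hdl y ltac:(unfold inI; lra) ltac:(rewrite Rminus_0_r, Rabs_right; lra)).
    rewrite L01 in Hy by lra. rewrite Rminus_0_l, Rabs_Ropp in Hy. lra. }
  intros t Ht. fold L. unfold inI in Ht.
  destruct (Rtotal_order t 0) as [Hlt|[Heq|Hgt]].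
  - destruct (Req_dec t (-1)) as [E|E].
    + subst. rewrite <- (Lsym (-1)). replace (- -1) with 1 by ring. auto.
    + rewrite <- Lsym. apply L01. lra.
  - subst; auto.
  - destruct (Req_dec t 1) as [E|E]. subst; auto. apply L01; lra.
Qed.

Lemma avoid_pts (L : list (R * R)) : (forall q, In q L -> snd q < 1) ->
  exists t, 0 < t < 1 /\ forall q, In q L -> snd q < t.
Proof.
  induction L as [|q L IH]; intros H.
  - exists (1/2). split. lra. intros q [].
  - destruct IH as [t [Ht Hq]]. intros; apply H; simpl; auto.
    assert (snd q < 1) by (apply H; simpl; auto).
    exists (Rmax t ((1 + snd q) / 2)). split.
    + split. eapply Rlt_le_trans; [|apply Rmax_l]. lra.
      unfold Rmax; destruct Rle_dec; lra.
    + intros q' [E|E]. subst. eapply Rlt_le_trans; [|apply Rmax_r]. lra.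
      eapply Rlt_le_trans; [|apply Rmax_l]. auto.
Qed.
Lemma is_derive_plus_R (f g : R -> R) x a b : is_derive f x a -> is_derive g x b ->
  is_derive (fun y => f y + g y) x (a + b).
Proof. intros. apply (is_derive_plus (K:=R_AbsRing) (V:=R_NormedModule)); auto. Qed.

Lemma is_derive_sumk k (d : nat -> R) (f : nat -> R -> R) (f' : nat -> R) x :
  (forall l, (l < k)%nat -> is_derive (f l) x (f' l)) ->
  is_derive (fun c => sumk k (fun l => d l * f l c)) x (sumk k (fun l => d l * f' l)).
Proof.
  induction k; intros H; simpl.
  - apply (is_derive_const (K:=R_AbsRing) (V:=R_NormedModule)).
  - apply is_derive_plus_R. apply IHk; intros; apply H; lia.
    apply is_derive_scal. apply H; lia.
Qed.

Lemma sumk_lin2 n a b f g : sumk n (fun l => a * f l + b * g l) = a * sumk n f + b * sumk n g.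
Proof. induction n; simpl. ring. rewrite IHn. ring. Qed.

Lemma rcont_sumk k (d : nat -> R) (f : nat -> R -> R) :
  (forall l, (l < k)%nat -> rcont (f l)) -> rcont (fun c => sumk k (fun l => d l * f l c)).
Proof.
  induction k; intros H; simpl. apply rcont_const.
  apply rcont_plus. apply IHk; intros; apply H; lia. apply rcont_scal, H; lia.
Qed.

Lemma RInt_sumk k (d : nat -> R) (f : nat -> R -> R) a b : inI a -> inI b ->
  (forall l, (l < k)%nat -> rcont (f l)) ->
  RInt (fun c => sumk k (fun l => d l * f l c)) a b = sumk k (fun l => d l * RInt (f l) a b).
Proof.
  intros Ha Hb. induction k; intros H; simpl.
  - rewrite RInt_const_R. ring.
  - assert (E1 : ex_RInt (fun c => sumk k (fun l => d l * f l c)) a b).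
    { apply rcont_ex_RInt; auto. apply rcont_sumk; intros; apply H; lia. }
    assert (E2 : ex_RInt (f k) a b) by (apply rcont_ex_RInt; auto; apply H; lia).
    assert (E3 : ex_RInt (fun c => d k * f k c) a b) by (apply rcont_ex_RInt; auto; apply rcont_scal, H; lia).
    rewrite (RInt_plus_R (fun c => sumk k (fun l => d l * f l c)) (fun c => d k * f k c) a b E1 E3).
    rewrite IHk by (intros; apply H; lia). rewrite (RInt_scal_R (f k) a b (d k) E2). auto.
Qed.

Definition ThK (Th : list (R * R)) (c : R) : R := cval Th (fun t => feven (ramp c) t).

Definition Phi (k : nat) (g : nat -> R -> R) (Th : list (R * R)) (l : nat) (c : R) : R :=
  if Nat.ltb l k then Gh (g l) c
  else if Nat.eqb l k then ThK Th c
  else if Nat.eqb l (S k) then 1 - c else (1 - c) ^ 2.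

Lemma sumk_Phi k g Th d c : sumk (S (S (S k))) (fun l => d l * Phi k g Th l c) =
  sumk k (fun l => d l * Gh (g l) c) + d k * ThK Th c + d (S k) * (1 - c) + d (S (S k)) * (1 - c) ^ 2.
Proof.
  simpl. rewrite (sumk_ext k _ (fun l => d l * Gh (g l) c)).
  2: { intros l Hl. unfold Phi. destruct (Nat.ltb_spec l k); [auto|lia]. }
  unfold Phi.
  destruct (Nat.ltb_spec k k); [lia|]. rewrite Nat.eqb_refl.
  destruct (Nat.ltb_spec (S k) k); [lia|]. destruct (Nat.eqb_spec (S k) k); [lia|]. rewrite Nat.eqb_refl.
  destruct (Nat.ltb_spec (S (S k)) k); [lia|]. destruct (Nat.eqb_spec (S (S k)) k); [lia|].
  destruct (Nat.eqb_spec (S (S k)) (S k)); [lia|]. ring.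
Qed.

Lemma nodep k (g : nat -> R -> R) (Th : list (R * R)) t0 :
  (forall i, (i < k)%nat -> inG0 (g i)) -> lin_indep_fin k (fun i => feven (g i)) ->
  (forall q, In q Th -> 0 < snd q < 1) -> cval Th (ind t0) <> 0 ->
  forall d, (forall c, inside c -> sumk (S (S (S k))) (fun l => d l * Phi k g Th l c) = 0) ->
  forall l, (l < S (S (S k)))%nat -> d l = 0.
Proof.
  intros HG Hind HTh Ht0 d Hd.
  assert (HGc : forall l, (l < k)%nat -> rcont (g l)) by (intros l Hl; apply G_rcont; apply HG; auto).
  set (S0 := fun c => sumk k (fun l => d l * Gh (g l) c) + d (S k) * (1 - c) + d (S (S k)) * (1 - c) ^ 2).
  set (S0' := fun c => sumk k (fun l => d l * - g l (clamp c)) + d (S k) * (-1) + d (S (S k)) * (- (2 * (1 - c)))).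
  assert (Hsum : forall c, inside c -> S0 c + d k * ThK Th c = 0).
  { intros c Hc. rewrite <- (Hd c Hc), sumk_Phi. unfold S0. ring. }
  assert (dS : forall c, is_derive S0 c (S0' c)).
  { intros c. unfold S0, S0'. apply is_derive_plus_R. apply is_derive_plus_R.
    - apply is_derive_sumk. intros l Hl. apply Gh_derive. auto.
    - apply is_derive_scal. auto_derive; auto; try (req; ring).
    - apply is_derive_scal. auto_derive; auto; try (req; ring). }
  assert (Hdk : d k = 0).
  { set (Lk := cscale (d k / 2) Th).
    assert (LkP : forall q, In q Lk -> 0 < snd q < 1).
    { intros q Hq. apply In_cscale in Hq. destruct Hq as [q' [Hq' E]]. rewrite E. auto. }
    assert (EK : forall c, 0 < c < 1 -> Kf Lk c = - S0 c).
    { intros c Hc. assert (Hci : inside c) by (unfold inside; lra).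
      specialize (Hsum c Hci). unfold Kf, Lk. rewrite cval_scale.
      assert (E2 : ThK Th c = / 2 * cval Th (fun t => ramp c t)).
      { unfold ThK. rewrite (cval_ext Th _ (fun t => / 2 * ramp c t + 0 * 0)).
        rewrite (cval_lin Th (/2) 0 (fun t => ramp c t) (fun _ => 0)). ring.
        intros q Hq. specialize (HTh q Hq). unfold feven, ramp.
        rewrite (Rmax_right (- snd q - c) 0) by lra. field. }
      rewrite E2 in Hsum. lra. }
    assert (HK : forall s, 0 < s < 1 -> exists D, is_derive (Kf Lk) s D).
    { intros s Hs. exists (- S0' s).
      apply is_derive_ext_loc with (fun c => - S0 c).
      - apply (locally_interval _ s 0 1); simpl; try lra.
        intros y Hy1 Hy2. rewrite EK; auto.
      - apply (is_derive_opp (K:=R_AbsRing) (V:=R_NormedModule)). apply dS. }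
    pose proof (kink_all Lk HK LkP (ind t0)) as Z.
    unfold Lk in Z. rewrite cval_scale in Z.
    apply Rmult_integral in Z. destruct Z as [Z|Z]; [lra|contradiction]. }
  assert (HS0 : forall c, inside c -> S0 c = 0).
  { intros c Hc. pose proof (Hsum c Hc). rewrite Hdk in H. lra. }
  assert (HS0' : forall c, inside c -> S0' c = 0).
  { intros c Hc.
    assert (D1 : is_derive S0 c 0).
    { apply is_derive_ext_loc with (fun _ => 0).
      - apply (locally_interval _ c (-1) 1); simpl; unfold inside in Hc; try lra.
        intros y Hy1 Hy2. rewrite HS0; auto. unfold inside; lra.
      - apply (is_derive_const (K:=R_AbsRing) (V:=R_NormedModule)). }
    pose proof (is_derive_unique _ _ _ D1). pose proof (is_derive_unique _ _ _ (dS c)).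
    congruence. }
  set (al := - d (S k) - 2 * d (S (S k))).
  set (be := 2 * d (S (S k))).
  assert (Hlin : forall c, inside c -> sumk k (fun l => d l * g l c) = al + be * c).
  { intros c Hc. pose proof (HS0' c Hc) as E. unfold S0' in E.
    rewrite clamp_id in E by (unfold inside, inI in *; lra).
    rewrite (sumk_ext k _ (fun l => - (d l * g l c))) in E by (intros; ring).
    rewrite sumk_opp in E. unfold al, be. lra. }
  assert (Hal : al = 0).
  { assert (Hm : inI (-1)) by (unfold inI; lra). assert (H1 : inI 1) by (unfold inI; lra).
    pose proof (RInt_sumk k d g (-1) 1 Hm H1 HGc) as E.
    rewrite (sumk_ext k _ (fun _ => 0)) in E.
    2: { intros l Hl. destruct (HG l Hl) as [_ Hi]. rewrite Hi. ring. }
    rewrite sumk_zero in E.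
    rewrite (RInt_ext_R _ (fun c => al + be * c)) in E.
    2: { intros x Hx. apply Hlin. unfold inside. unfold Rmin, Rmax in Hx; destruct Rle_dec; lra. }
    rewrite (RInt_plus_R (fun _ => al) (fun c => be * c)) in E.
    2: apply ex_RInt_const. 2: apply rcont_ex_RInt; auto; apply rcont_scal, rcont_id.
    rewrite RInt_const_R, (RInt_scal_R (fun c => c)), RInt_idf in E.
    2: apply rcont_ex_RInt; auto; apply rcont_id.
    lra. }
  assert (Hdl : forall l, (l < k)%nat -> d l = 0).
  { apply Hind. intros t Ht. rewrite lincomb_sumk.
    destruct (Req_dec t 1) as [E|E].
    { subst. rewrite (sumk_ext k _ (fun _ => 0)). apply sumk_zero.
      intros l Hl. rewrite feven_G_p1. ring. apply HG; auto. }
    destruct (Req_dec t (-1)) as [E'|E'].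
    { subst. rewrite (sumk_ext k _ (fun _ => 0)). apply sumk_zero.
      intros l Hl. rewrite feven_G_m1. ring. apply HG; auto. }
    assert (Hti : inside t) by (unfold inside, inI in *; lra).
    assert (Hti' : inside (- t)) by (unfold inside, inI in *; lra).
    rewrite (sumk_ext k _ (fun l => /2 * (d l * g l t) + /2 * (d l * g l (- t)))).
    2: { intros; unfold feven; field. }
    rewrite (sumk_lin2 k (/2) (/2) (fun l => d l * g l t) (fun l => d l * g l (- t))).
    rewrite Hlin, Hlin by auto. rewrite Hal. field. }
  assert (HS0z : forall c, inside c -> d (S k) * (1 - c) + d (S (S k)) * (1 - c) ^ 2 = 0).
  { intros c Hc. pose proof (HS0 c Hc) as E. unfold S0 in E.
    rewrite (sumk_ext k _ (fun _ => 0)) in E by (intros l Hl; rewrite Hdl; auto; ring).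
    rewrite sumk_zero in E. lra. }
  pose proof (HS0z 0 ltac:(unfold inside; lra)).
  pose proof (HS0z (1/2) ltac:(unfold inside; lra)).
  assert (Ea : d (S (S k)) = 0) by nra.
  assert (Eb : d (S k) = 0) by nra.
  intros l Hl.
  destruct (Nat.lt_ge_cases l k). auto.
  assert (HH : l = k \/ l = S k \/ l = S (S k)) by lia.
  destruct HH as [HH|[HH|HH]]; subst l; auto.
Qed.
Lemma lincomb_ext_h n c h h' t : (forall i, (i < n)%nat -> h i t = h' i t) -> lincomb n c h t = lincomb n c h' t.
Proof. induction n; simpl; intros H; auto. rewrite IHn, (H n); [reflexivity|lia|]. intros; apply H; lia. Qed.

Lemma In_bigc_intro N G q l : (l < N)%nat -> In q (G l) -> In q (bigc N G).
Proof.
  induction N; intros Hl Hq; simpl. lia.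
  apply in_or_app. destruct (Nat.eq_dec l N). subst; right; auto. left; apply IHN; auto; lia.
Qed.

Lemma Phi_lt k g Th l c : (l < k)%nat -> Phi k g Th l c = Gh (g l) c.
Proof. intros H. unfold Phi. destruct (Nat.ltb_spec l k); [auto|lia]. Qed.
Lemma Phi_k k g Th c : Phi k g Th k c = ThK Th c.
Proof. unfold Phi. destruct (Nat.ltb_spec k k); [lia|]. rewrite Nat.eqb_refl. auto. Qed.
Lemma Phi_Sk k g Th c : Phi k g Th (S k) c = 1 - c.
Proof.
  unfold Phi. destruct (Nat.ltb_spec (S k) k); [lia|]. destruct (Nat.eqb_spec (S k) k); [lia|].
  rewrite Nat.eqb_refl. auto.
Qed.
Lemma Phi_SSk k g Th c : Phi k g Th (S (S k)) c = (1 - c) ^ 2.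
Proof.
  unfold Phi. destruct (Nat.ltb_spec (S (S k)) k); [lia|]. destruct (Nat.eqb_spec (S (S k)) k); [lia|].
  destruct (Nat.eqb_spec (S (S k)) (S k)); [lia|]. auto.
Qed.

Lemma step k (g : nat -> R -> R) (s : nat -> bool) :
  (forall i, (i < k)%nat -> inG0 (g i)) -> lin_indep_fin k (fun i => feven (g i)) ->
  exists h, inG0 h /\
    (forall i, (i < k)%nat -> (s i = true -> Q h (g i) > 0) /\ (s i = false -> Q h (g i) < 0)) /\
    lin_indep_fin (S k) (fun i => feven (if Nat.eqb i k then h else g i)).
Proof.
  intros HG Hind.
  set (F := fun i => feven (g i)).
  assert (HGc : forall l, (l < k)%nat -> rcont (g l)) by (intros l Hl; apply G_rcont; apply HG; auto).
  destruct (dich (fun x => 0 < x < 1) F k) as [[d [[l [Hl Hdl]] Hs]] | Hsurj].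
  { exfalso. apply Hdl. apply (indep_01 k F); auto.
    - intros i Hi. apply rcont_feven; auto.
    - intros i t Hi. apply feven_sym.
    - intros i Hi. apply feven_G_p1. apply HG; auto. }
  assert (HB : forall p, { A | (forall q, In q A -> 0 < snd q < 1) /\
                 forall j, (j < k)%nat -> cval A (F j) = if Nat.eqb p j then 1 else 0 }).
  { intros p. apply constructive_indefinite_description.
    destruct (Hsurj (fun j => if Nat.eqb p j then 1 else 0)) as [A [HA1 HA2]].
    exists A. split; auto. }
  set (B := fun p => proj1_sig (HB p)).
  assert (BP : forall p q, In q (B p) -> 0 < snd q < 1) by (intros p; apply (proj2_sig (HB p))).
  assert (BV : forall p j, (j < k)%nat -> cval (B p) (F j) = if Nat.eqb p j then 1 else 0)
    by (intros p; apply (proj2_sig (HB p))).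
  destruct (avoid_pts (bigc k B)) as [t0 [Ht0 Hpts]].
  { intros q Hq. apply In_bigc in Hq. destruct Hq as [p [_ Hq]]. apply BP in Hq. lra. }
  set (Th := (1, t0) :: bigc k (fun p => cscale (- F p t0) (B p))).
  assert (ThP : forall q, In q Th -> 0 < snd q < 1).
  { intros q [E|Hq]. subst q; simpl; auto.
    apply In_bigc in Hq. destruct Hq as [p [_ Hq]]. apply In_cscale in Hq.
    destruct Hq as [q' [Hq' E]]. rewrite E. eapply BP; eauto. }
  assert (ThF : forall i, (i < k)%nat -> cval Th (F i) = 0).
  { intros i Hi. unfold Th. simpl. rewrite cval_bigc.
    rewrite (sumk_ext k _ (fun p => (- F p t0) * (if Nat.eqb i p then 1 else 0))).
    rewrite sumk_kron by auto. ring.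
    intros p Hp. rewrite cval_scale, BV by auto. rewrite Nat.eqb_sym. auto. }
  assert (ThI : cval Th (ind t0) = 1).
  { unfold Th. simpl. rewrite cval_bigc.
    rewrite (sumk_ext k _ (fun _ => 0)). rewrite sumk_zero. unfold ind.
    destruct (Req_EM_T t0 t0); [ring|congruence].
    intros p Hp. rewrite cval_scale. rewrite (cval_ext _ _ (fun _ => 0)). rewrite cval_zero. ring.
    intros q Hq. unfold ind. destruct (Req_EM_T (snd q) t0); auto.
    exfalso. assert (snd q < t0). apply Hpts. apply In_bigc_intro with p; auto. lra. }
  destruct (dich inside (Phi k g Th) (S (S (S k)))) as [[d [[l [Hl Hdl]] Hs]] | Hsurj2].
  { exfalso. apply Hdl. apply (nodep k g Th t0); auto. rewrite ThI; lra. }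
  set (y := fun l => if Nat.ltb l k then (if s l then -1 else 1) else if Nat.eqb l k then 1 else 0).
  destruct (Hsurj2 y) as [A [AP AV]].
  assert (E1 : cval A (fun c => 1 - c) = 0).
  { rewrite <- (cval_ext A (Phi k g Th (S k))) by (intros; apply Phi_Sk).
    rewrite AV by lia. unfold y. destruct (Nat.ltb_spec (S k) k); [lia|].
    destruct (Nat.eqb_spec (S k) k); [lia|]. auto. }
  assert (E2 : cval A (fun c => (1 - c) ^ 2) = 0).
  { rewrite <- (cval_ext A (Phi k g Th (S (S k)))) by (intros; apply Phi_SSk).
    rewrite AV by lia. unfold y. destruct (Nat.ltb_spec (S (S k)) k); [lia|].
    destruct (Nat.eqb_spec (S (S k)) k); [lia|]. auto. }
  assert (EK : cval A (ThK Th) = 1).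
  { rewrite <- (cval_ext A (Phi k g Th k)) by (intros; apply Phi_k).
    rewrite AV by lia. unfold y. destruct (Nat.ltb_spec k k); [lia|]. rewrite Nat.eqb_refl. auto. }
  assert (EG : forall i, (i < k)%nat -> cval A (fun c => RInt (g i) c 1) = if s i then -1 else 1).
  { intros i Hi. rewrite <- (cval_ext A (Phi k g Th i)).
    rewrite AV by lia. unfold y. destruct (Nat.ltb_spec i k); [auto|lia].
    intros p Hp. rewrite Phi_lt by auto. apply Gh_eq. specialize (AP p Hp). unfold inside in AP; unfold inI; lra. }
  set (lam := / (2 * (1 + cabs A))).
  assert (Hlam : 0 < lam) by (unfold lam; pose proof (cabs_pos A); apply Rinv_0_lt_compat; lra).
  exists (hfun A lam). split; [|split].
  - apply hfun_inG0; auto.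
  - intros i Hi. rewrite Q_hfun; auto. rewrite E1, EG by auto.
    split; intros E; rewrite E; lra.
  - intros c Hc i Hi.
    assert (Hck : c k = 0).
    { assert (Z : cval Th (lincomb (S k) c (fun i => feven (if Nat.eqb i k then hfun A lam else g i))) = 0).
      { rewrite (cval_ext _ _ (fun _ => 0)). apply cval_zero.
        intros q Hq. apply Hc. specialize (ThP q Hq). unfold inI; lra. }
      rewrite (cval_ext Th _ (fun t => 1 * lincomb k c F t + c k * feven (hfun A lam) t)) in Z.
      2: { intros q Hq. simpl. rewrite Nat.eqb_refl. f_equal. rewrite Rmult_1_l. apply lincomb_ext_h.
           intros j Hj. destruct (Nat.eqb_spec j k); [lia|auto]. }
      rewrite (cval_lin Th 1 (c k) (lincomb k c F) (feven (hfun A lam))) in Z.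
      rewrite (cval_ext Th (lincomb k c F) (fun t => sumk k (fun i => c i * F i t))) in Z
        by (intros; apply lincomb_sumk).
      rewrite cval_sumk in Z.
      rewrite (sumk_ext k _ (fun _ => 0)) in Z by (intros j Hj; rewrite ThF; auto; ring).
      rewrite sumk_zero in Z.
      rewrite (cval_ext Th (feven (hfun A lam)) (fun t => lam * cval A (fun c => feven (ramp c) t))) in Z
        by (intros; apply feven_hfun).
      rewrite (cval_ext Th _ (fun t => lam * cval A (fun c => feven (ramp c) t) + 0 * 0)) in Z by (intros; ring).
      rewrite (cval_lin Th lam 0 (fun t => cval A (fun c => feven (ramp c) t)) (fun _ => 0)) in Z.
      rewrite <- (cval_swap A Th (fun c t => feven (ramp c) t)) in Z.
      change (cval A (fun c0 => cval Th (fun t => feven (ramp c0) t))) with (cval A (ThK Th)) in Z.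
      rewrite EK in Z.
      assert (c k * lam = 0) by lra.
      apply Rmult_integral in H. destruct H; [auto|lra]. }
    destruct (Nat.eq_dec i k) as [->|Hik]; auto.
    assert (Hi' : (i < k)%nat) by lia.
    clear Hi Hik. revert i Hi'. apply Hind. intros t Ht.
    specialize (Hc t Ht). simpl in Hc. rewrite Hck, Rmult_0_l, Rplus_0_r in Hc.
    rewrite <- Hc. apply lincomb_ext_h. intros j Hj. destruct (Nat.eqb_spec j k); [lia|auto].
Qed.


Definition bdec (P : Prop) : bool := if excluded_middle_informative P then true else false.
Lemma bdec_true P : bdec P = true <-> P.
Proof. unfold bdec. destruct excluded_middle_informative; split; intros; auto; discriminate || contradiction. Qed.

Fixpoint maxl {S : Type} (f : S -> nat) (l : list S) : nat :=
  match l with nil => O | y :: l' => Nat.max (f y) (maxl f l') end.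
Lemma maxl_ge {S : Type} (f : S -> nat) l y : In y l -> (f y <= maxl f l)%nat.
Proof. induction l; simpl; intros H. contradiction. destruct H. subst; lia. specialize (IHl H); lia. Qed.

Lemma universal_from_EP (U : nat -> nat -> Prop) (HU : is_tournament U)
  (EP : forall (M : nat) (eps : nat -> bool), exists k, (M <= k)%nat /\
   forall i, (i < M)%nat -> (U i k <-> eps i = true)) : universal_tournament U.
Proof.
  split; auto.
  intros Ty R [c Hc] HR S0 phi [l0 Hl0] [Hinj Hemb].
  set (exc := fun j : nat => match excluded_middle_informative (exists x, c x = j) with
                | left H => Some (proj1_sig (constructive_indefinite_description _ H))
                | right _ => None end).
  assert (exc_some : forall j x, exc j = Some x -> c x = j).
  { intros j x. unfold exc. destruct excluded_middle_informative as [H|H]; intros E; [|discriminate].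
    inversion E. apply (proj2_sig (constructive_indefinite_description _ H)). }
  assert (exc_none : forall j, exc j = None -> forall x, c x <> j).
  { intros j. unfold exc. destruct excluded_middle_informative as [H|H]; intros E; [discriminate|].
    intros x Hx. apply H. eauto. }
  set (D := fun j y => S0 y \/ (c y < j)%nat).
  set (Lf := fix Lf j := match j with O => l0 | S j' => Lf j' ++ match exc j' with Some x => x :: nil | None => nil end end).
  assert (DL : forall j y, In y (Lf j) -> D j y).
  { induction j; intros y Hy; simpl in Hy.
    - left. apply Hl0; auto.
    - apply in_app_or in Hy. destruct Hy as [Hy|Hy].
      + destruct (IHj y Hy) as [H|H]. left; auto. right; lia.
      + destruct (exc j) eqn:E; [|contradiction]. destruct Hy as [Hy|[]]. subst.
        right. apply exc_some in E. lia. }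
  assert (LD : forall j y, D j y -> In y (Lf j)).
  { induction j; intros y Hy; simpl.
    - destruct Hy as [Hy|Hy]. apply Hl0; auto. lia.
    - apply in_or_app. destruct Hy as [Hy|Hy]. left; apply IHj; left; auto.
      destruct (Nat.eq_dec (c y) j).
      + right. destruct (exc j) eqn:E. apply exc_some in E. left. apply Hc. congruence.
        exfalso. eapply exc_none; eauto.
      + left. apply IHj. right. lia. }
  set (pickv := fun (Psi : Ty -> nat) (j : nat) (x : Ty) =>
         epsilon (inhabits O) (fun v => (S (maxl Psi (Lf j)) <= v)%nat /\
            forall i, (i < S (maxl Psi (Lf j)))%nat ->
              (U i v <-> bdec (exists y, In y (Lf j) /\ Psi y = i /\ R y x) = true))).
  assert (pickv_spec : forall Psi j x, (S (maxl Psi (Lf j)) <= pickv Psi j x)%nat /\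
            forall i, (i < S (maxl Psi (Lf j)))%nat ->
              (U i (pickv Psi j x) <-> bdec (exists y, In y (Lf j) /\ Psi y = i /\ R y x) = true)).
  { intros. unfold pickv. apply epsilon_spec. apply EP. }
  set (upd := fun (Psi : Ty -> nat) (x : Ty) (v : nat) (y : Ty) =>
                if excluded_middle_informative (y = x) then v else Psi y).
  set (Psif := fix Psif j := match j with O => phi | S j' =>
           match exc j' with
           | Some x => if excluded_middle_informative (S0 x) then Psif j'
                       else upd (Psif j') x (pickv (Psif j') j' x)
           | None => Psif j' end end).
  assert (Stab : forall j y, D j y -> Psif (S j) y = Psif j y).
  { intros j y Hy. simpl. destruct (exc j) eqn:E; auto.
    destruct excluded_middle_informative as [H0|H0]; auto.
    unfold upd. destruct excluded_middle_informative as [H1|H1]; auto.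
    subst. exfalso. apply exc_some in E. destruct Hy as [Hy|Hy]; auto. lia. }
  assert (Inv : forall j, (forall y z, D j y -> D j z -> Psif j y = Psif j z -> y = z) /\
                          (forall y z, D j y -> D j z -> (R y z <-> U (Psif j y) (Psif j z))) /\
                          (forall y, S0 y -> Psif j y = phi y)).
  { induction j.
    - simpl. split; [|split].
      + intros y z Hy Hz E. destruct Hy as [Hy|Hy]; [|lia]. destruct Hz as [Hz|Hz]; [|lia]. auto.
      + intros y z Hy Hz. destruct Hy as [Hy|Hy]; [|lia]. destruct Hz as [Hz|Hz]; [|lia]. auto.
      + auto.
    - destruct IHj as [I1 [I2 I3]].
      assert (S0pres : forall y, S0 y -> Psif (S j) y = phi y).
      { intros y Hy. rewrite Stab. auto. left; auto. }
      destruct (exc j) eqn:E.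
      2: { assert (DD : forall y, D (S j) y -> D j y).
           { intros y [Hy|Hy]. left; auto. right. pose proof (exc_none j E y). lia. }
           assert (PE : Psif (S j) = Psif j) by (simpl; rewrite E; auto).
           rewrite PE in *. split; [|split]; auto. }
      match type of E with exc j = Some ?z => rename z into x end. assert (Hcx := exc_some _ _ E).
      destruct (classic (S0 x)) as [HS0|HS0].
      + assert (DD : forall y, D (S j) y -> D j y).
        { intros y [Hy|Hy]. left; auto. destruct (Nat.eq_dec (c y) j). left.
          assert (y = x) by (apply Hc; congruence). subst; auto. right; lia. }
        assert (PE : Psif (S j) = Psif j).
        { simpl. rewrite E. destruct excluded_middle_informative; [auto|contradiction]. }
        rewrite PE in *. split; [|split]; auto.
      + set (v := pickv (Psif j) j x).
        assert (PE : Psif (S j) = upd (Psif j) x v).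
        { simpl. rewrite E. destruct excluded_middle_informative; [contradiction|auto]. }
        assert (DD : forall y, D (S j) y -> D j y \/ y = x).
        { intros y [Hy|Hy]. left; left; auto. destruct (Nat.eq_dec (c y) j). right. apply Hc; congruence.
          left; right; lia. }
        assert (Dx : ~ D j x) by (intros [H|H]; auto; lia).
        assert (Uy : forall y, D j y -> upd (Psif j) x v y = Psif j y).
        { intros y Hy. unfold upd. destruct excluded_middle_informative; auto. subst; contradiction. }
        assert (Ux : upd (Psif j) x v x = v).
        { unfold upd. destruct excluded_middle_informative; auto. congruence. }
        destruct (pickv_spec (Psif j) j x) as [Vge Vrel]. fold v in Vge, Vrel.
        assert (Vbig : forall y, D j y -> (Psif j y < v)%nat).
        { intros y Hy. pose proof (maxl_ge (Psif j) _ _ (LD j y Hy)). lia. }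
        assert (Rel1 : forall y, D j y -> (R y x <-> U (Psif j y) v)).
        { intros y Hy. rewrite Vrel by (pose proof (maxl_ge (Psif j) _ _ (LD j y Hy)); lia). rewrite bdec_true. split.
          - intros H. exists y. repeat split; auto.
          - intros [y' [Hy' [E' Hr]]]. 
            assert (y' = y) by (apply I1; auto).
            subst; auto. }
        destruct HR as [HRirr HRt]. destruct HU as [HUirr HUt].
        rewrite PE in *. split; [|split]; auto.
        * intros y z Hy Hz EE.
          destruct (DD y Hy) as [Hy'|Hy']; destruct (DD z Hz) as [Hz'|Hz'].
          -- rewrite !Uy in EE by auto. apply I1; auto.
          -- subst z. rewrite (Uy y Hy'), Ux in EE. pose proof (Vbig y Hy'). lia.
          -- subst y. rewrite (Uy z Hz'), Ux in EE. pose proof (Vbig z Hz'). lia.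
          -- congruence.
        * intros y z Hy Hz.
          destruct (DD y Hy) as [Hy'|Hy']; destruct (DD z Hz) as [Hz'|Hz'].
          -- rewrite !Uy by auto. apply I2; auto.
          -- subst z. rewrite (Uy y Hy'), Ux. apply Rel1; auto.
          -- subst y. rewrite (Uy z Hz'), Ux.
             assert (Hxz : x <> z) by (intro; subst; contradiction).
             assert (Hvz : v <> Psif j z) by (pose proof (Vbig z Hz'); lia).
             pose proof (HRt x z Hxz). pose proof (HUt v (Psif j z) Hvz). pose proof (Rel1 z Hz').
             tauto.
          -- subst y z. split; intros H. exfalso; eapply HRirr; eauto. exfalso; eapply HUirr; eauto. }
  assert (Dmono : forall j j' y, (j <= j')%nat -> D j y -> D j' y).
  { intros j j' y H [H1|H1]. left; auto. right; lia. }
  assert (StabG : forall j y, D j y -> forall j', (j <= j')%nat -> Psif j' y = Psif j y).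
  { intros j y Hy j' Hj. induction Hj. auto. rewrite Stab. auto. apply Dmono with j; auto. }
  exists (fun y => Psif (S (c y)) y).
  assert (Dself : forall y, D (S (c y)) y) by (intros; right; lia).
  split; [split|].
  - intros y z _ _ EE. set (J := S (Nat.max (c y) (c z))).
    rewrite <- (StabG _ y (Dself y) J) in EE by lia. rewrite <- (StabG _ z (Dself z) J) in EE by lia.
    destruct (Inv J) as [I1 _]. apply I1; auto. apply Dmono with (S (c y)); auto; lia.
    apply Dmono with (S (c z)); auto; lia.
  - intros y z _ _. set (J := S (Nat.max (c y) (c z))).
    rewrite <- (StabG _ y (Dself y) J) by lia. rewrite <- (StabG _ z (Dself z) J) by lia.
    destruct (Inv J) as [_ [I2 _]]. apply I2; auto. apply Dmono with (S (c y)); auto; lia.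
    apply Dmono with (S (c z)); auto; lia.
  - intros x Hx. destruct (Inv (S (c x))) as [_ [_ I3]]. auto.
Qed.
From Stdlib Require Import Cantor.

Lemma bits_exist (M : nat) (eps : nat -> bool) : exists b, forall i, (i < M)%nat -> Nat.testbit b i = eps i.
Proof.
  induction M.
  - exists O. intros; lia.
  - destruct IHM as [b Hb].
    exists (if eps M then Nat.setbit b M else Nat.clearbit b M). intros i Hi.
    destruct (Nat.eq_dec i M).
    + subst. destruct (eps M) eqn:E. apply Nat.setbit_eq. rewrite Nat.clearbit_eq. auto.
    + destruct (eps M). rewrite Nat.setbit_neq by auto. apply Hb; lia.
      rewrite Nat.clearbit_neq by auto. apply Hb; lia.
Qed.

Definition sig_pat (n k i : nat) : bool :=
  let p := Cantor.of_nat (k - n) in if Nat.ltb i (fst p) then Nat.testbit (snd p) i else true.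

Definition spec_h (G : nat -> R -> R) (k : nat) (s : nat -> bool) (h : R -> R) : Prop :=
  inG0 h /\ (forall i, (i < k)%nat -> (s i = true -> Q h (G i) > 0) /\ (s i = false -> Q h (G i) < 0)) /\
  lin_indep_fin (S k) (fun i => feven (if Nat.eqb i k then h else G i)).

Definition pick (G : nat -> R -> R) (k : nat) (s : nat -> bool) : R -> R :=
  epsilon (inhabits (fun x : R => x)) (spec_h G k s).

Fixpoint Tseq (n : nat) (f : nat -> R -> R) (j : nat) : nat -> R -> R :=
  match j with
  | O => f
  | S j' => fun i => if Nat.eqb i (n + j') then pick (Tseq n f j') (n + j') (sig_pat n (n + j'))
                     else Tseq n f j' i
  end.

Definition gseq (n : nat) (f : nat -> R -> R) (i : nat) : R -> R := Tseq n f (S i) i.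

Lemma lincomb_ext_c n c c' h t : (forall i, (i < n)%nat -> c i = c' i) -> lincomb n c h t = lincomb n c' h t.
Proof. induction n; simpl; intros H; auto. rewrite IHn, (H n); [reflexivity|lia|]. intros; apply H; lia. Qed.

Lemma lin_indep_prefix m N h h' : lin_indep_fin m h -> (N <= m)%nat -> (forall i, (i < N)%nat -> h i = h' i) ->
  lin_indep_fin N h'.
Proof.
  intros Hm HN Hh c Hc i Hi.
  set (c' := fun i => if Nat.ltb i N then c i else 0).
  assert (E : forall t, lincomb m c' h t = lincomb N c h' t).
  { intros t. assert (E1 : forall m', (N <= m')%nat -> lincomb m' c' h t = lincomb N c' h t).
    { intros m' Hm'. induction Hm'. auto. simpl. rewrite IHHm'. unfold c'.
      destruct (Nat.ltb_spec m0 N); [lia|]. ring. }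
    rewrite E1 by auto. rewrite (lincomb_ext_c N c' c).
    apply lincomb_ext_h. intros; rewrite Hh; auto.
    intros j Hj. unfold c'. destruct (Nat.ltb_spec j N); [auto|lia]. }
  assert (Z : c' i = 0). { apply Hm. intros t Ht. rewrite E. auto. lia. }
  unfold c' in Z. destruct (Nat.ltb_spec i N); [auto|lia].
Qed.

Theorem theorem5p11 (n : nat) (f : nat -> R -> R) :
  strongly_generic n f ->
  exists g : nat -> R -> R,
    (forall i, (i < n)%nat -> g i = f i) /\
    (forall i, inG0 (g i)) /\
    lin_indep_inf (fun i => feven (g i)) /\
    universal_tournament (Gamma_on g).
Proof.
  intros [HG0 [Hind HQ]].
  set (T := Tseq n f).
  assert (Inv : forall j, (forall i, (i < n + j)%nat -> inG0 (T j i)) /\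
      lin_indep_fin (n + j) (fun i => feven (T j i)) /\
      (forall i, (i < n)%nat -> T j i = f i) /\
      (forall k i, (n <= k < n + j)%nat -> (i < k)%nat ->
         (sig_pat n k i = true -> Q (T j k) (T j i) > 0) /\ (sig_pat n k i = false -> Q (T j k) (T j i) < 0))).
  { induction j.
    - rewrite Nat.add_0_r. split; [|split; [|split]]; auto.
      intros; lia.
    - destruct IHj as [I1 [I2 [I3 I4]]].
      set (k := (n + j)%nat).
      set (p := pick (T j) k (sig_pat n k)).
      assert (Hp : spec_h (T j) k (sig_pat n k) p).
      { unfold p, pick. apply epsilon_spec.
        destruct (step k (T j) (sig_pat n k) I1 I2) as [h Hh]. exists h. exact Hh. }
      destruct Hp as [P1 [P2 P3]].
      assert (TS : forall i, T (S j) i = if Nat.eqb i k then p else T j i) by (intros; reflexivity).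
      rewrite Nat.add_succ_r. fold k.
      split; [|split; [|split]].
      + intros i Hi. rewrite TS. destruct (Nat.eqb_spec i k); auto. apply I1. lia.
      + intros c Hc. apply P3. intros t Ht. rewrite <- (Hc t Ht). apply lincomb_ext_h.
        intros; rewrite TS; auto.
      + intros i Hi. rewrite TS. destruct (Nat.eqb_spec i k). unfold k in *; lia. auto.
      + intros k' i Hk' Hi. rewrite !TS.
        destruct (Nat.eqb_spec i k); [lia|].
        destruct (Nat.eqb_spec k' k).
        * subst k'. apply P2. auto.
        * apply I4; auto. lia. }
  assert (Stab : forall j i, (i < n + j)%nat -> T (S j) i = T j i).
  { intros j i Hi. change (T (S j) i) with (if Nat.eqb i (n + j) then pick (T j) (n + j) (sig_pat n (n + j)) else T j i).
    destruct (Nat.eqb_spec i (n + j)); [lia|auto]. }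
  assert (StabG : forall j i, (i < n + j)%nat -> forall j', (j <= j')%nat -> T j' i = T j i).
  { intros j i Hi j' Hj. induction Hj. auto. rewrite Stab by lia. auto. }
  pose (g := gseq n f).
  assert (Tg : forall j i, (i < n + j)%nat -> T j i = g i).
  { intros j i Hi. unfold g, gseq. fold T.
    rewrite <- (StabG j i Hi (Nat.max j (S i))) by lia.
    rewrite <- (StabG (S i) i ltac:(lia) (Nat.max j (S i))) by lia. auto. }
  assert (Gin : forall i, inG0 (g i)).
  { intros i. destruct (Inv (S i)) as [I1 _]. rewrite <- (Tg (S i) i) by lia. apply I1. lia. }
  assert (QS : forall k i, (n <= k)%nat -> (i < k)%nat ->
      (sig_pat n k i = true -> Q (g k) (g i) > 0) /\ (sig_pat n k i = false -> Q (g k) (g i) < 0)).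
  { intros k i Hk Hi. destruct (Inv (S (k - n))) as [_ [_ [_ I4]]].
    rewrite <- (Tg (S (k - n)) k), <- (Tg (S (k - n)) i) by lia. apply I4; auto; lia. }
  assert (Qnz : forall i j, i <> j -> Q (g j) (g i) <> 0).
  { intros i j Hij.
    assert (Hanti : forall a b, Q (g a) (g b) = - Q (g b) (g a)).
    { intros a b. pose proof (Q_antisym (g a) (g b) (proj1 (Gin a)) (proj1 (Gin b))). lra. }
    destruct (Nat.lt_ge_cases i n) as [Hi|Hi]; destruct (Nat.lt_ge_cases j n) as [Hj|Hj].
    - rewrite <- (Tg O i), <- (Tg O j) by lia. unfold T; simpl. apply HQ; auto.
    - destruct (QS j i Hj ltac:(lia)) as [A1 A2]. destruct (sig_pat n j i); [specialize (A1 eq_refl)|specialize (A2 eq_refl)]; lra.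
    - rewrite Hanti. destruct (QS i j Hi ltac:(lia)) as [A1 A2].
      destruct (sig_pat n i j); [specialize (A1 eq_refl)|specialize (A2 eq_refl)]; lra.
    - destruct (Nat.lt_ge_cases i j).
      + destruct (QS j i Hj ltac:(lia)) as [A1 A2]. destruct (sig_pat n j i); [specialize (A1 eq_refl)|specialize (A2 eq_refl)]; lra.
      + rewrite Hanti. destruct (QS i j Hi ltac:(lia)) as [A1 A2].
        destruct (sig_pat n i j); [specialize (A1 eq_refl)|specialize (A2 eq_refl)]; lra. }
  exists g. split; [|split; [|split]].
  - intros i Hi. rewrite <- (Tg O i) by lia. reflexivity.
  - exact Gin.
  - intros N. destruct (Inv N) as [_ [I2 _]].
    apply (lin_indep_prefix (n + N) N (fun i => feven (T N i))); auto. lia.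
    intros i Hi. rewrite Tg by lia. auto.
  - apply universal_from_EP.
    + split.
      * intros i [H _]. apply H; auto.
      * intros i j Hij. unfold Gamma_on.
        pose proof (Qnz i j Hij). pose proof (Qnz j i ltac:(auto)).
        pose proof (Q_antisym (g j) (g i) (proj1 (Gin j)) (proj1 (Gin i))).
        split.
        -- destruct (Rlt_dec 0 (Q (g j) (g i))). left; split; auto.
           right; split; auto. lra.
        -- intros [[_ A] [_ B]]. lra.
    + intros M eps. destruct (bits_exist M eps) as [b Hb].
      exists (n + Cantor.to_nat (M, b))%nat.
      pose proof (Cantor.to_nat_non_decreasing M b).
      split. lia.
      intros i Hi.
      assert (Hsig : sig_pat n (n + Cantor.to_nat (M, b)) i = eps i).
      { unfold sig_pat. replace (n + Cantor.to_nat (M, b) - n)%nat with (Cantor.to_nat (M, b)) by lia.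
        rewrite Cantor.cancel_of_to. simpl. destruct (Nat.ltb_spec i M); [auto|lia]. }
      destruct (QS (n + Cantor.to_nat (M, b))%nat i ltac:(lia) ltac:(lia)) as [A1 A2].
      rewrite Hsig in A1, A2. unfold Gamma_on. split.
      * intros [_ Hq]. destruct (eps i); auto. specialize (A2 eq_refl). lra.
      * intros E. split. lia. auto.
Qed.
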